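(* Let $\gamma$ be an oval and fix an origin $O$ in its interior. For a point $A$ in the exterior of $\gamma$, let $\varphi\in(0,\pi)$ be the angle at $A$ between the two tangent segments $Ax_-(A)$ and $Ax_+(A)$, and set $$C_A=\cot\Big(\frac{\varphi}{2}\Big)\left(\frac{1}{|Ax_-(A)|}+\frac{1}{|Ax_+(A)|}\right).$$ Write $A=r(\cos\psi,\sin\psi)$ in polar coordinates centered at $O$. Then for each fixed direction $\psi$, $$\lim_{r\to\infty}C_A=\frac{4}{w_\gamma(\psi)}.$$
   Context: An oval is a smooth closed simple planar curve $\gamma$ with everywhere positive curvature; it bounds a compact strictly convex domain. From an exterior point $A$ there are exactly two tangent lines to $\gamma$. Denote their tangency points by $x_+(A)$ and $x_-(A)$; the formula is symmetric in the two. Width: $w_\gamma(\psi)$ is the distance between the two support lines of $\gamma$ parallel to the direction $(\cos\psi,\sin\psi)$. *)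

(* Defs.v *)
From Stdlib Require Import Reals Lra.
From Coquelicot Require Import Coquelicot.
Open Scope R_scope.

Definition det2 (a b c d : R) : R := a * d - b * c.
Definition dot2 (a b c d : R) : R := a * c + b * d.

Definition curv_num (gx gy : R -> R) (t : R) : R :=
  det2 (Derive gx t) (Derive gy t) (Derive_n gx 2 t) (Derive_n gy 2 t).

(* An oval: smooth (C^infinity), closed (T-periodic), simple (injective on a
   period), with everywhere nonvanishing curvature (x'y''-y'x'' <> 0, which
   also forces regularity gamma' <> 0). *)
Definition is_oval (gx gy : R -> R) (T : R) : Prop :=
  0 < T /\
  (forall n t, ex_derive_n gx n t) /\
  (forall n t, ex_derive_n gy n t) /\
  (forall t, gx (t + T) = gx t /\ gy (t + T) = gy t) /\
  (forall s t, 0 <= s < T -> 0 <= t < T ->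
      gx s = gx t -> gy s = gy t -> s = t) /\
  (forall t, curv_num gx gy t <> 0).

(* determinant of gamma'(t) and (P - gamma(t)): zero iff P lies on the
   tangent line at gamma(t) *)
Definition tang_det (gx gy : R -> R) (t px py : R) : R :=
  det2 (Derive gx t) (Derive gy t) (px - gx t) (py - gy t).

(* Interior of the (strictly convex) domain bounded by the oval: points lying
   strictly on the inner side (the side towards which the curve bends) of every
   tangent line. *)
Definition in_interior (gx gy : R -> R) (px py : R) : Prop :=
  forall t, 0 < curv_num gx gy t * tang_det gx gy t px py.

(* Exterior: complement of the closed domain, i.e. strictly on the outer side
   of some tangent line. *)
Definition in_exterior (gx gy : R -> R) (px py : R) : Prop :=
  exists t, curv_num gx gy t * tang_det gx gy t px py < 0.

Definition is_tangency_point (gx gy : R -> R) (ax ay qx qy : R) : Prop :=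
  exists t, qx = gx t /\ qy = gy t /\ tang_det gx gy t ax ay = 0.

Definition dist2 (ax ay bx by' : R) : R := sqrt ((bx - ax) ^ 2 + (by' - ay) ^ 2).

Definition angle_at (ax ay px py qx qy : R) : R :=
  acos (dot2 (px - ax) (py - ay) (qx - ax) (qy - ay) /
        (dist2 ax ay px py * dist2 ax ay qx qy)).

Definition cot (x : R) : R := cos x / sin x.

(* C_A for the point A with tangency points P = x_-(A), Q = x_+(A) *)
Definition C_A (ax ay px py qx qy : R) : R :=
  cot (angle_at ax ay px py qx qy / 2) *
  (/ dist2 ax ay px py + / dist2 ax ay qx qy).

Definition support (gx gy : R -> R) (nx ny : R) : R :=
  real (Lub_Rbar (fun s => exists t, s = dot2 (gx t) (gy t) nx ny)).

(* width in direction psi: distance between the two support lines parallel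
   to (cos psi, sin psi), i.e. with unit normal n = (-sin psi, cos psi):
   h(n) + h(-n) *)
Definition width (gx gy : R -> R) (psi : R) : R :=
  support gx gy (- sin psi) (cos psi) + support gx gy (sin psi) (- cos psi).

(* Main.v *)
Require Import Defs.
From Stdlib Require Import Reals Lra Lia ZArith FunctionalExtensionality Classical.
From Coquelicot Require Import Coquelicot.
Open Scope R_scope.

Lemma periodic_nat (f : R -> R) (T : R) :
  (forall t, f (t + T) = f t) -> forall (n : nat) t, f (t + INR n * T) = f t.
Proof.
  intros H n; induction n as [|n IH]; intro t.
  - simpl. f_equal. ring.
  - rewrite S_INR. replace (t + (INR n + 1) * T) with ((t + INR n * T) + T) by ring.
    rewrite H. apply IH.
Qed.

Lemma periodic_Z (f : R -> R) (T : R) :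
  (forall t, f (t + T) = f t) -> forall (k : Z) t, f (t + IZR k * T) = f t.
Proof.
  intros H k t. destruct k as [|p|p].
  - simpl. f_equal. ring.
  - rewrite <- positive_nat_Z, <- INR_IZR_INZ. apply periodic_nat; auto.
  - replace (IZR (Z.neg p)) with (- INR (Pos.to_nat p)).
    2:{ rewrite INR_IZR_INZ, positive_nat_Z. reflexivity. }
    rewrite <- (periodic_nat f T H (Pos.to_nat p) (t + - INR (Pos.to_nat p) * T)).
    f_equal. ring.
Qed.

Lemma reduce_mod (T : R) : 0 < T -> forall t a, exists k : Z, a <= t + IZR k * T < a + T.
Proof.
  intros HT t a.
  destruct (base_Int_part ((t - a) / T)) as [H1 H2].
  exists (- Int_part ((t - a) / T))%Z. rewrite opp_IZR.
  set (k := IZR (Int_part ((t - a) / T))) in *.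
  assert (E : t - a = ((t - a)/T) * T) by (field; lra).
  assert (0 <= ((t-a)/T - k) * T) by (apply Rmult_le_pos; lra).
  assert (((t-a)/T - k) * T < 1 * T) by (apply Rmult_lt_compat_r; lra).
  split; nra.
Qed.

Lemma nozero_sign (f : R -> R) : continuity f -> (forall t, f t <> 0) ->
  (forall t, 0 < f t) \/ (forall t, f t < 0).
Proof.
  intros Hc Hz.
  destruct (Rlt_or_le 0 (f 0)) as [H0|H0].
  - left. intro t. destruct (Rlt_or_le 0 (f t)) as [|Ht]; auto.
    exfalso. assert (f t < 0) by (specialize (Hz t); lra).
    destruct (Rle_or_lt t 0) as [Hl|Hl].
    + destruct (IVT_cor f t 0 Hc Hl) as [z [_ Hz0]]. nra. apply (Hz z Hz0).
    + destruct (IVT_cor f 0 t Hc (Rlt_le _ _ Hl)) as [z [_ Hz0]]. nra. apply (Hz z Hz0).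
  - right. assert (f 0 < 0) by (specialize (Hz 0); lra).
    intro t. destruct (Rlt_or_le (f t) 0) as [|Ht]; auto.
    exfalso. assert (0 < f t) by (specialize (Hz t); lra).
    destruct (Rle_or_lt t 0) as [Hl|Hl].
    + destruct (IVT_cor f t 0 Hc Hl) as [z [_ Hz0]]. nra. apply (Hz z Hz0).
    + destruct (IVT_cor f 0 t Hc (Rlt_le _ _ Hl)) as [z [_ Hz0]]. nra. apply (Hz z Hz0).
Qed.

Lemma periodic_min (f : R -> R) (T : R) : 0 < T -> continuity f ->
  (forall t, f (t + T) = f t) -> exists t0, forall t, f t0 <= f t.
Proof.
  intros HT Hc Hp.
  destruct (continuity_ab_min f 0 T (Rlt_le _ _ HT) (fun c _ => Hc c)) as [m [Hm _]].
  exists m. intro t. destruct (reduce_mod T HT t 0) as [k Hk].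
  rewrite <- (periodic_Z f T Hp k t). apply Hm. lra.
Qed.

Lemma periodic_max (f : R -> R) (T : R) : 0 < T -> continuity f ->
  (forall t, f (t + T) = f t) -> exists t0, forall t, f t <= f t0.
Proof.
  intros HT Hc Hp.
  destruct (continuity_ab_maj f 0 T (Rlt_le _ _ HT) (fun c _ => Hc c)) as [m [Hm _]].
  exists m. intro t. destruct (reduce_mod T HT t 0) as [k Hk].
  rewrite <- (periodic_Z f T Hp k t). apply Hm. lra.
Qed.

Lemma polar (a b : R) : 0 < a ^ 2 + b ^ 2 ->
  exists th, a = sqrt (a ^ 2 + b ^ 2) * cos th /\ b = sqrt (a ^ 2 + b ^ 2) * sin th.
Proof.
  intro H. set (rho := sqrt (a ^ 2 + b ^ 2)).
  assert (Hr : 0 < rho) by (apply sqrt_lt_R0; auto).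
  assert (Hr2 : rho * rho = a ^ 2 + b ^ 2) by (apply sqrt_sqrt; lra).
  assert (Hb : -1 <= a / rho <= 1).
  { assert (a ^ 2 <= rho ^ 2) by nra.
    assert (-rho <= a <= rho) by (split; nra).
    split.
    - apply (Rmult_le_reg_r rho); auto. unfold Rdiv. rewrite Rmult_assoc, Rinv_l by lra. lra.
    - apply (Rmult_le_reg_r rho); auto. unfold Rdiv. rewrite Rmult_assoc, Rinv_l by lra. lra. }
  assert (Hs : sqrt (1 - (a / rho)²) = Rabs b / rho).
  { unfold Rsqr. replace ((a/rho)*(a/rho)) with ((a/rho)^2) by ring.
  { apply sqrt_lem_1.
    - assert ((a/rho)^2 <= 1) by (destruct Hb; nra). lra.
    - apply Rmult_le_pos; [apply Rabs_pos| left; apply Rinv_0_lt_compat; auto].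
    - assert (E : Rabs b * Rabs b = b ^ 2) by (rewrite <- pow2_abs; ring).
      replace (Rabs b / rho * (Rabs b / rho)) with ((Rabs b * Rabs b) / (rho * rho)) by (field; lra).
      replace (1 - (a/rho)^2) with ((rho*rho - a^2)/(rho*rho)) by (field; lra).
      rewrite E, Hr2. f_equal. ring. } }
  destruct (Rle_or_lt 0 b) as [Hb0|Hb0].
  - exists (acos (a / rho)). rewrite cos_acos, sin_acos by auto. rewrite Hs, Rabs_pos_eq by auto.
    split; field; lra.
  - exists (- acos (a / rho)). rewrite cos_neg, sin_neg, cos_acos, sin_acos by auto.
    rewrite Hs, Rabs_left by auto. split; field; lra.
Qed.

Lemma two_pi_mult (x : R) : cos x = 1 -> exists k : Z, x = 2 * IZR k * PI.
Proof.
  intro H. assert (sin (x / 2) = 0).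
  { replace x with (2 * (x/2)) in H by field. rewrite cos_2a_sin in H.
    assert (sin (x/2) * sin (x/2) = 0) by lra. apply Rmult_integral in H0. tauto. }
  destruct (sin_eq_0_0 _ H0) as [k Hk]. exists k. lra.
Qed.

Lemma deriv0_const (f : R -> R) : (forall t, is_derive f t 0) -> forall t s, f t = f s.
Proof.
  intros H t s.
  destruct (MVT_gen f s t (fun _ => 0)) as [c [_ Hc]].
  - intros x _. apply H.
  - intros x _. apply continuity_pt_filterlim. apply (ex_derive_continuous f x). eexists; apply H.
  - lra.
Qed.

Lemma db_zero (P Q th : R -> R) t dP dQ :
  is_derive P t dP -> is_derive Q t dQ ->
  is_derive th t ((P t * dQ - Q t * dP) / (P t ^ 2 + Q t ^ 2)) -> 0 < P t ^ 2 + Q t ^ 2 ->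
  is_derive (fun t => (cos (th t) * Q t - sin (th t) * P t) / sqrt (P t ^ 2 + Q t ^ 2)) t 0.
Proof.
  intros HP HQ Hth Hpos. auto_derive.
  { repeat split; try (eexists; eassumption); try nra.
    apply Rgt_not_eq, sqrt_lt_R0; nra. }
  change (Derive (fun x => th x) t) with (Derive th t).
  change (Derive (fun x => P x) t) with (Derive P t).
  change (Derive (fun x => Q x) t) with (Derive Q t).
  rewrite (is_derive_unique _ _ _ Hth), (is_derive_unique _ _ _ HP), (is_derive_unique _ _ _ HQ).
  replace (P t * (P t * 1) + Q t * (Q t * 1)) with (P t ^ 2 + Q t ^ 2) by ring.
  assert (Hr : sqrt (P t ^ 2 + Q t ^ 2) * sqrt (P t ^ 2 + Q t ^ 2) = P t ^ 2 + Q t ^ 2) by (apply sqrt_sqrt; lra).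
  assert (Hr0 : 0 < sqrt (P t ^ 2 + Q t ^ 2)) by (apply sqrt_lt_R0; lra).
  set (rho := sqrt (P t ^ 2 + Q t ^ 2)) in *.
  rewrite Hr. field_simplify; try lra.
Qed.

Lemma da_zero (P Q th : R -> R) t dP dQ :
  is_derive P t dP -> is_derive Q t dQ ->
  is_derive th t ((P t * dQ - Q t * dP) / (P t ^ 2 + Q t ^ 2)) -> 0 < P t ^ 2 + Q t ^ 2 ->
  is_derive (fun t => (cos (th t) * P t + sin (th t) * Q t) / sqrt (P t ^ 2 + Q t ^ 2)) t 0.
Proof.
  intros HP HQ Hth Hpos. auto_derive.
  { repeat split; try (eexists; eassumption); try nra.
    apply Rgt_not_eq, sqrt_lt_R0; nra. }
  change (Derive (fun x => th x) t) with (Derive th t).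
  change (Derive (fun x => P x) t) with (Derive P t).
  change (Derive (fun x => Q x) t) with (Derive Q t).
  rewrite (is_derive_unique _ _ _ Hth), (is_derive_unique _ _ _ HP), (is_derive_unique _ _ _ HQ).
  replace (P t * (P t * 1) + Q t * (Q t * 1)) with (P t ^ 2 + Q t ^ 2) by ring.
  assert (Hr : sqrt (P t ^ 2 + Q t ^ 2) * sqrt (P t ^ 2 + Q t ^ 2) = P t ^ 2 + Q t ^ 2) by (apply sqrt_sqrt; lra).
  assert (Hr0 : 0 < sqrt (P t ^ 2 + Q t ^ 2)) by (apply sqrt_lt_R0; lra).
  set (rho := sqrt (P t ^ 2 + Q t ^ 2)) in *.
  rewrite Hr. field_simplify; try lra.
Qed.

Lemma lift (P Q dP dQ : R -> R) :
  (forall t, is_derive P t (dP t)) -> (forall t, is_derive Q t (dQ t)) ->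
  (forall t, ex_derive dP t) -> (forall t, ex_derive dQ t) ->
  (forall t, 0 < P t ^ 2 + Q t ^ 2) ->
  exists th : R -> R,
   (forall t, is_derive th t ((P t * dQ t - Q t * dP t) / (P t ^ 2 + Q t ^ 2))) /\
   (forall t, P t = sqrt (P t ^ 2 + Q t ^ 2) * cos (th t) /\
              Q t = sqrt (P t ^ 2 + Q t ^ 2) * sin (th t)).
Proof.
  intros HP HQ HdP HdQ Hpos.
  set (om := fun t => (P t * dQ t - Q t * dP t) / (P t ^ 2 + Q t ^ 2)).
  assert (Hom : forall t, continuous om t).
  { intro t. apply (ex_derive_continuous om t). unfold om. auto_derive.
    specialize (Hpos t).
    split; [eexists; apply HP|]. split; [apply HdQ|]. split; [eexists; apply HQ|]. split; [apply HdP|].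
    split; [eexists; apply HP|]. split; [eexists; apply HQ|]. split; [|exact I]. 
    replace (P t * (P t * 1) + Q t * (Q t * 1)) with (P t ^ 2 + Q t ^ 2) by ring. lra. }
  destruct (polar (P 0) (Q 0) (Hpos 0)) as [th0 [H0a H0b]].
  set (th := fun t => th0 + RInt om 0 t).
  assert (Hth : forall t, is_derive th t (om t)).
  { intro t. unfold th. replace (om t) with (0 + om t) by ring.
    apply (is_derive_plus (fun _ => th0) (fun t => RInt om 0 t)).
    - apply (is_derive_const th0 t : is_derive (fun _ => th0) t 0).
    - apply (is_derive_RInt om (fun t => RInt om 0 t) 0).
      + apply filter_forall. intro y. apply (RInt_correct om 0 y). apply (ex_RInt_continuous om). intros; apply Hom.
      + apply Hom. }
  exists th. split; [exact Hth|].
  assert (Hb : forall t, (cos (th t) * Q t - sin (th t) * P t) / sqrt (P t ^ 2 + Q t ^ 2) = 0).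
  { intro t. rewrite (deriv0_const (fun t => (cos (th t) * Q t - sin (th t) * P t) / sqrt (P t ^ 2 + Q t ^ 2)) 
      (fun t => db_zero P Q th t (dP t) (dQ t) (HP t) (HQ t) (Hth t) (Hpos t)) t 0).
    unfold th. rewrite RInt_point. change (zero : R) with 0. rewrite Rplus_0_r.
    set (r0 := sqrt (P 0 ^ 2 + Q 0 ^ 2)) in *. rewrite H0a, H0b. unfold Rdiv. ring. }
  assert (Ha : forall t, (cos (th t) * P t + sin (th t) * Q t) / sqrt (P t ^ 2 + Q t ^ 2) = 1).
  { intro t. rewrite (deriv0_const (fun t => (cos (th t) * P t + sin (th t) * Q t) / sqrt (P t ^ 2 + Q t ^ 2)) 
      (fun t => da_zero P Q th t (dP t) (dQ t) (HP t) (HQ t) (Hth t) (Hpos t)) t 0).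
    unfold th. rewrite RInt_point. change (zero : R) with 0. rewrite Rplus_0_r.
    assert (Hr0 : 0 < sqrt (P 0 ^ 2 + Q 0 ^ 2)) by (apply sqrt_lt_R0; apply Hpos).
    set (r0 := sqrt (P 0 ^ 2 + Q 0 ^ 2)) in *. rewrite H0a, H0b.
    pose proof (sin2_cos2 th0) as Hsc. unfold Rsqr in Hsc.
    replace (cos th0 * (r0 * cos th0) + sin th0 * (r0 * sin th0)) with (r0 * (sin th0 * sin th0 + cos th0 * cos th0)) by ring.
    rewrite Hsc. field. lra. }
  intro t. specialize (Hb t). specialize (Ha t).
  assert (Hr0 : 0 < sqrt (P t ^ 2 + Q t ^ 2)) by (apply sqrt_lt_R0; apply Hpos).
  set (rho := sqrt (P t ^ 2 + Q t ^ 2)) in *.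
  assert (E1 : cos (th t) * Q t - sin (th t) * P t = 0).
  { apply (Rmult_eq_reg_r (/ rho)). rewrite Rmult_0_l. exact Hb. apply Rinv_neq_0_compat. lra. }
  assert (E2 : cos (th t) * P t + sin (th t) * Q t = rho).
  { apply (Rmult_eq_reg_r (/ rho)). rewrite Rinv_r by lra. exact Ha. apply Rinv_neq_0_compat. lra. }
  pose proof (sin2_cos2 (th t)) as H. unfold Rsqr in H.
  split.
  - transitivity (cos (th t) * (cos (th t) * P t + sin (th t) * Q t) - sin (th t) * (cos (th t) * Q t - sin (th t) * P t)).
    + replace (P t) with (P t * (sin (th t) * sin (th t) + cos (th t) * cos (th t))) at 1 by (rewrite H; ring). ring.
    + rewrite E1, E2. ring.
  - transitivity (sin (th t) * (cos (th t) * P t + sin (th t) * Q t) + cos (th t) * (cos (th t) * Q t - sin (th t) * P t)).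
    + replace (Q t) with (Q t * (sin (th t) * sin (th t) + cos (th t) * cos (th t))) at 1 by (rewrite H; ring). ring.
    + rewrite E1, E2. ring.
Qed.

Lemma is_derive_cont (f : R -> R) df t : is_derive f t df -> continuity_pt f t.
Proof. intro H. apply continuity_pt_filterlim. apply (ex_derive_continuous f t). eexists; exact H. Qed.

Lemma mvt (f df : R -> R) a b : a <= b -> (forall t, a <= t <= b -> is_derive f t (df t)) ->
  exists c, a <= c <= b /\ f b - f a = df c * (b - a).
Proof.
  intros Hab H. destruct (MVT_gen f a b df) as [c [Hc E]].
  - intros x Hx. apply H. rewrite Rmin_left, Rmax_right in Hx by lra. lra.
  - intros x Hx. rewrite Rmin_left, Rmax_right in Hx by lra. apply (is_derive_cont f (df x)), H. lra.
  - exists c. rewrite Rmin_left, Rmax_right in Hc by lra. auto.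
Qed.

Lemma incr_strict (f df : R -> R) : (forall t, is_derive f t (df t)) -> (forall t, 0 < df t) ->
  forall a b, a < b -> f a < f b.
Proof.
  intros H Hp a b Hab. destruct (mvt f df a b) as [c [_ E]]; auto. lra.
  specialize (Hp c). nra.
Qed.

Lemma incr_lower (f df : R -> R) c : (forall t, is_derive f t (df t)) -> (forall t, c <= df t) ->
  forall a b, a <= b -> c * (b - a) <= f b - f a.
Proof.
  intros H Hp a b Hab. destruct (mvt f df a b) as [d [_ E]]; auto.
  rewrite E. specialize (Hp d). nra.
Qed.

Lemma incr_upper (f df : R -> R) c : (forall t, is_derive f t (df t)) -> (forall t, df t <= c) ->
  forall a b, a <= b -> f b - f a <= c * (b - a).
Proof.
  intros H Hp a b Hab. destruct (mvt f df a b) as [d [_ E]]; auto.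
  rewrite E. specialize (Hp d). nra.
Qed.

Lemma per_deriv (f df : R -> R) T : (forall t, f (t + T) = f t) -> (forall t, is_derive f t (df t)) ->
  forall t, df (t + T) = df t.
Proof.
  intros Hp Hd t.
  assert (H1 : is_derive (fun s => f (s + T)) t (df (t + T))).
  { replace (df (t + T)) with (scal 1 (df (t + T))) by (unfold scal; simpl; unfold mult; simpl; ring).
    apply (is_derive_comp f (fun s => s + T)). apply Hd.
    auto_derive; auto. }
  assert (H2 : is_derive f t (df (t + T))).
  { apply (is_derive_ext (fun s => f (s + T))); auto. }
  rewrite <- (is_derive_unique _ _ _ H2). apply is_derive_unique, Hd.
Qed.

Lemma is_derive_shift (f : R -> R) T t d : is_derive f (t + T) d -> is_derive (fun s => f (s + T)) t d.
Proof.
  intro H. replace d with (scal 1 d) by (unfold scal; simpl; unfold mult; simpl; ring).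
  apply (is_derive_comp f (fun s => s + T)). apply H. auto_derive; auto.
Qed.

Lemma angle_period (P Q th om : R -> R) T :
  (forall t, P (t+T) = P t) -> (forall t, Q (t+T) = Q t) ->
  (forall t, is_derive th t (om t)) -> (forall t, om (t+T) = om t) ->
  (forall t, 0 < P t ^ 2 + Q t ^ 2) ->
  (forall t, P t = sqrt (P t ^ 2 + Q t ^ 2) * cos (th t) /\ Q t = sqrt (P t ^ 2 + Q t ^ 2) * sin (th t)) ->
  exists k : Z, forall t, th (t + T) = th t + 2 * IZR k * PI.
Proof.
  intros HP HQ Hd Hom Hpos Hpol.
  assert (Hc : forall t, th (t + T) - th t = th (0 + T) - th 0).
  { intro t. apply (deriv0_const (fun t => th (t + T) - th t)). intro s.
    replace 0 with (om (s + T) - om s) by (rewrite Hom; ring).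
    apply (is_derive_minus (fun t => th (t + T)) th). apply is_derive_shift, Hd. apply Hd. }
  destruct (Hpol 0) as [A1 B1]. destruct (Hpol (0 + T)) as [A2 B2].
  rewrite !HP, !HQ in A2. rewrite !HP, !HQ in B2.
  assert (Hr : 0 < sqrt (P 0 ^ 2 + Q 0 ^ 2)) by (apply sqrt_lt_R0, Hpos).
  set (r := sqrt (P 0 ^ 2 + Q 0 ^ 2)) in *.
  assert (C : cos (th (0 + T)) = cos (th 0)) by (apply (Rmult_eq_reg_l r); lra).
  assert (S : sin (th (0 + T)) = sin (th 0)) by (apply (Rmult_eq_reg_l r); lra).
  destruct (two_pi_mult (th (0 + T) - th 0)) as [k Hk].
  { rewrite cos_minus, C, S. pose proof (sin2_cos2 (th 0)). unfold Rsqr in H. lra. }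
  exists k. intro t. specialize (Hc t). lra.
Qed.

Lemma cont_plus f g : continuity f -> continuity g -> continuity (fun t => f t + g t).
Proof. intros; exact (continuity_plus f g H H0). Qed.
Lemma cont_minus f g : continuity f -> continuity g -> continuity (fun t => f t - g t).
Proof. intros; exact (continuity_minus f g H H0). Qed.
Lemma cont_mult f g : continuity f -> continuity g -> continuity (fun t => f t * g t).
Proof. intros; exact (continuity_mult f g H H0). Qed.
Lemma cont_comp f g : continuity f -> continuity g -> continuity (fun t => f (g t)).
Proof. intros; exact (continuity_comp g f H0 H). Qed.
Lemma cont_const c : continuity (fun _ => c).
Proof. intros x. apply continuity_const. intros a b; auto. Qed.
Lemma cont_sq f : continuity f -> continuity (fun t => f t ^ 2).
Proof. intro H. assert (E : (fun t => f t ^ 2) = (fun t => f t * f t)) by (apply functional_extensionality; intro; ring).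
  rewrite E. apply cont_mult; auto. Qed.
Lemma cont_derive f df : (forall t, is_derive f t (df t)) -> continuity f.
Proof. intros H t. apply (is_derive_cont f (df t)), H. Qed.

Lemma lipschitz_cont (f : R -> R) K : 0 <= K -> (forall x y, Rabs (f x - f y) <= K * Rabs (x - y)) -> continuity f.
Proof.
  intros HK H x. unfold continuity_pt, continue_in, limit1_in, limit_in. intros eps Heps.
  exists (eps / (K + 1)). split.
  - apply Rdiv_lt_0_compat; lra.
  - intros y [_ Hy]. simpl in *. unfold Rdist in *. 
    apply (Rle_lt_trans _ (K * Rabs (y - x))). apply H.
    apply (Rle_lt_trans _ ((K + 1) * Rabs (y - x))). pose proof (Rabs_pos (y - x)). nra.
    replace eps with ((K + 1) * (eps / (K + 1))) by (field; lra).
    apply Rmult_lt_compat_l; lra.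
Qed.

Lemma winding_one (vx vy al da : R -> R) T (k : Z) :
  0 < T ->
  (forall t, vx (t+T) = vx t) -> (forall t, vy (t+T) = vy t) ->
  continuity vx -> continuity vy ->
  (forall t, is_derive al t (da t)) -> (forall t, da (t+T) = da t) -> continuity da ->
  (forall t, 0 < da t) ->
  (forall t, vx t = sqrt (vx t ^ 2 + vy t ^ 2) * cos (al t) /\ vy t = sqrt (vx t ^ 2 + vy t ^ 2) * sin (al t)) ->
  (forall t, al (t + T) = al t + 2 * IZR k * PI) ->
  (forall s t, 0 < t - s < T -> vx s = vx t -> vy s = vy t -> False) ->
  k = 1%Z.
Proof.
  intros HT Hpx Hpy Hcx Hcy Hd Hpd Hcd Hdp Hpol Hal Hinj.
  assert (Hinc : forall a b, a < b -> al a < al b) by (apply (incr_strict al da); auto).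
  assert (Hinj_al : forall a b, al a = al b -> a = b).
  { intros a b E. destruct (Rtotal_order a b) as [H|[H|H]]; auto.
    - apply Hinc in H. lra. - apply Hinc in H. lra. }
  assert (Hk1 : (0 < k)%Z).
  { apply lt_0_IZR. specialize (Hinc 0 (0 + T) ltac:(lra)). rewrite Hal in Hinc. 
    pose proof PI_RGT_0. nra. }
  destruct (Z.eq_dec k 1) as [|Hne]; auto. exfalso.
  assert (Hk2 : 2 <= IZR k) by (apply IZR_le; lia).
  pose proof PI_RGT_0 as Hpi.
  assert (Hcal : continuity al) by (apply (cont_derive al da); auto).
  destruct (periodic_min da T HT Hcd Hpd) as [tm Htm].
  destruct (periodic_max da T HT Hcd Hpd) as [tM HtM].
  set (c := da tm) in *. set (L := da tM) in *.
  assert (Hc : 0 < c) by apply Hdp.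
  assert (Hex : forall t, {s | t <= s <= t + T /\ al s = al t + 2 * PI}).
  { intro t. destruct (IVT_gen al t (t + T) (al t + 2 * PI) Hcal) as [s [Hs1 Hs2]].
    - rewrite Hal. rewrite Rmin_left, Rmax_right; nra.
    - exists s. rewrite Rmin_left, Rmax_right in Hs1 by lra. auto. }
  set (sg := fun t => proj1_sig (Hex t)).
  assert (Hsg : forall t, t <= sg t <= t + T /\ al (sg t) = al t + 2 * PI).
  { intro t. unfold sg. destruct (Hex t) as [s Hs]. simpl. auto. }
  assert (Hlow : forall x y, c * Rabs (x - y) <= Rabs (al x - al y)).
  { intros x y. destruct (Rle_or_lt y x).
    - pose proof (incr_lower al da c Hd Htm y x H). assert (0 <= c * (x - y)) by (apply Rmult_le_pos; lra).
      rewrite !Rabs_pos_eq; lra.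
    - pose proof (incr_lower al da c Hd Htm x y (Rlt_le _ _ H)). specialize (Hinc x y H). rewrite !Rabs_left; lra. }
  assert (Hup : forall x y, Rabs (al x - al y) <= L * Rabs (x - y)).
  { intros x y. destruct (Rle_or_lt y x).
    - pose proof (incr_upper al da L Hd HtM y x H). rewrite !Rabs_pos_eq; try lra.
      pose proof (incr_lower al da c Hd Htm y x H). assert (0 <= c * (x - y)) by (apply Rmult_le_pos; lra). lra.
    - pose proof (incr_upper al da L Hd HtM x y (Rlt_le _ _ H)). rewrite !Rabs_left; try lra.
      specialize (Hinc x y H). lra. }
  assert (HL : 0 < L) by apply Hdp.
  assert (Hcsg : continuity sg).
  { apply (lipschitz_cont sg (L / c)). apply Rlt_le, Rdiv_lt_0_compat; lra.
    intros x y. apply (Rmult_le_reg_l c); auto.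
    replace (c * (L / c * Rabs (x - y))) with (L * Rabs (x - y)) by (field; lra).
    eapply Rle_trans; [apply Hlow|]. destruct (Hsg x) as [_ Ex]. destruct (Hsg y) as [_ Ey].
    rewrite Ex, Ey. replace (al x + 2 * PI - (al y + 2 * PI)) with (al x - al y) by ring. apply Hup. }
  set (N := fun t => vx t ^ 2 + vy t ^ 2).
  set (d := fun t => N t - N (sg t)).
  assert (Hcd' : continuity d).
  { unfold d, N. apply cont_minus. apply cont_plus; apply cont_sq; auto.
    apply cont_plus; apply cont_sq; apply cont_comp; auto. }
  assert (HNp : forall t, N (t + T) = N t) by (intro; unfold N; rewrite Hpx, Hpy; auto).
  assert (Hnz : forall e, (e = 1 \/ e = -1) -> (forall t, 0 < e * d t) -> False).
  { intros e He Hpos.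
    assert (Hit : forall j, al (Nat.iter j sg 0) = al 0 + 2 * INR j * PI /\
                  (j = 0%nat \/ e * N (Nat.iter j sg 0) < e * N 0)).
    { induction j as [|j [IH1 IH2]].
      - simpl. split; [ring|auto].
      - simpl Nat.iter. destruct (Hsg (Nat.iter j sg 0)) as [_ E]. split.
        + rewrite E, IH1, S_INR. ring.
        + right. specialize (Hpos (Nat.iter j sg 0)). unfold d in Hpos.
          destruct IH2 as [->|IH2]; simpl in *; nra. }
    destruct (Hit (Z.to_nat k)) as [E1 [E2|E2]]; [lia|].
    rewrite INR_IZR_INZ, Z2Nat.id in E1 by lia.
    assert (Eq : Nat.iter (Z.to_nat k) sg 0 = 0 + T).
    { apply Hinj_al. rewrite E1, Hal. ring. }
    rewrite Eq, HNp in E2. lra. }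
  destruct (Classical_Prop.classic (exists t, d t = 0)) as [[ts Hts]|Hno].
  2:{ destruct (nozero_sign d Hcd') as [H|H].
      - intros t E. apply Hno. eauto.
      - apply (Hnz 1); auto. intro t; rewrite Rmult_1_l; auto.
      - apply (Hnz (-1)); auto. intro t; specialize (H t); lra. }
  destruct (Hsg ts) as [[Hs1 Hs2] Es].
  set (s := sg ts) in *.
  assert (Hs3 : s <> ts) by (intro E; rewrite E in Es; lra).
  assert (Hs4 : s <> ts + T) by (intro E; rewrite E, Hal in Es; nra).
  assert (HN : N s = N ts) by (unfold d in Hts; fold s in Hts; lra).
  destruct (Hpol ts) as [A1 B1]. destruct (Hpol s) as [A2 B2].
  fold (N ts) in A1, B1. fold (N s) in A2, B2. rewrite HN in A2, B2.
  rewrite Es in A2, B2. rewrite cos_plus, cos_2PI, sin_2PI in A2. rewrite sin_plus, cos_2PI, sin_2PI in B2.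
  apply (Hinj ts s); lra.
Qed.

Lemma cos_mid a x b k : -(PI/2) <= a -> a <= x -> x <= b -> b <= PI/2 -> k < cos a -> k < cos b -> k < cos x.
Proof.
  intros H1 H2 H3 H4 Ha Hb. pose proof PI_RGT_0.
  destruct (Rle_or_lt 0 x) as [Hx|Hx].
  - destruct (Req_dec x b) as [E|E]. subst; auto.
    assert (cos b < cos x) by (apply cos_decreasing_1; lra). lra.
  - rewrite <- cos_neg. rewrite <- cos_neg in Ha.
    destruct (Req_dec x a) as [E|E]. subst; auto.
    assert (cos (-a) < cos (-x)) by (apply cos_decreasing_1; lra). lra.
Qed.

Lemma mono_up f df a b : a <= b -> (forall t, a <= t <= b -> is_derive f t (df t)) ->
  (forall t, a <= t <= b -> 0 <= df t) -> f a <= f b.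
Proof. intros Hab Hd Hp. destruct (mvt f df a b Hab Hd) as [c [Hc E]]. specialize (Hp c Hc). nra. Qed.

Lemma mono_down f df a b : a <= b -> (forall t, a <= t <= b -> is_derive f t (df t)) ->
  (forall t, a <= t <= b -> df t <= 0) -> f b <= f a.
Proof. intros Hab Hd Hp. destruct (mvt f df a b Hab Hd) as [c [Hc E]]. specialize (Hp c Hc). nra. Qed.

Lemma dG (th om m w : R -> R) beta r t : is_derive th t (om t) -> is_derive m t (om t * w t) ->
  is_derive (fun t => r * sin (beta - th t) + m t) t (om t * (w t - r * cos (beta - th t))).
Proof.
  intros H1 H2. auto_derive.
  - split; [eexists; exact H1|]. split; [eexists; exact H2|]. exact I.
  - replace (Derive (fun x => th x) t) with (om t) by (symmetry; apply is_derive_unique; auto).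
    replace (Derive (fun x => m x) t) with (om t * w t) by (symmetry; apply is_derive_unique; auto). unfold Rminus. ring.
Qed.

Lemma abs_btw x d : Rabs x <= d -> -d <= x <= d.
Proof. intro H. pose proof (Rle_abs x). pose proof (Rle_abs (-x)). rewrite Rabs_Ropp in H1. lra. Qed.

Lemma th_le (th om : R -> R) : (forall t, is_derive th t (om t)) -> (forall t, 0 < om t) ->
  forall a b, a <= b -> th a <= th b.
Proof. intros H1 H2 a b Hab. destruct (Req_dec a b). subst; lra. left. apply (incr_strict th om); auto; lra. Qed.

Lemma win_unique (th om m w : R -> R) beta r B :
  (forall t, is_derive th t (om t)) -> (forall t, 0 < om t) ->
  (forall t, is_derive m t (om t * w t)) -> (forall t, Rabs (m t) <= B) -> (forall t, Rabs (w t) <= B) ->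
  0 <= B -> 2 * B < r ->
  forall t1 t2, beta - PI/2 <= th t1 <= beta + PI/2 -> beta - PI/2 <= th t2 <= beta + PI/2 ->
  r * sin (beta - th t1) + m t1 = 0 -> r * sin (beta - th t2) + m t2 = 0 -> t1 = t2.
Proof.
  intros Hth Hom Hm HmB HwB HB Hr.
  assert (Hz : forall t, beta - PI/2 <= th t <= beta + PI/2 -> r * sin (beta - th t) + m t = 0 ->
            1/2 < cos (beta - th t)).
  { intros t Ht E. pose proof (cos_ge_0 (beta - th t) ltac:(lra) ltac:(lra)) as Hc0.
    pose proof (HmB t) as Hb. apply abs_btw in Hb.
    pose proof (sin2_cos2 (beta - th t)) as Hsc. unfold Rsqr in Hsc.
    set (s := sin (beta - th t)) in *. set (co := cos (beta - th t)) in *.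
    assert (Hm2 : (r * s) * (r * s) <= B * B) by (replace (r * s) with (- m t) by lra; nra).
    destruct (Rlt_or_le (1/2) co) as [|Hco]; auto. exfalso.
    assert (co * co <= 1/4) by nra.
    assert (s * s >= 3/4) by lra.
    assert ((r * s) * (r * s) = r * r * (s * s)) by ring.
    assert (r * r * (s * s) >= r * r * (3/4)) by (apply Rle_ge, Rmult_le_compat_l; nra).
    nra. }
  assert (Hlt : forall t1 t2, t1 < t2 -> beta - PI/2 <= th t1 <= beta + PI/2 -> beta - PI/2 <= th t2 <= beta + PI/2 ->
    r * sin (beta - th t1) + m t1 = 0 -> r * sin (beta - th t2) + m t2 = 0 -> False).
  { intros t1 t2 H12 W1 W2 E1 E2.
    pose proof (Hz t1 W1 E1) as C1. pose proof (Hz t2 W2 E2) as C2.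
    destruct (mvt (fun t => r * sin (beta - th t) + m t) (fun t => om t * (w t - r * cos (beta - th t))) t1 t2)
      as [xi [Hxi Exi]]; [lra| intros; apply dG; auto |].
    rewrite E1, E2 in Exi.
    assert (Hxi0 : om xi * (w xi - r * cos (beta - th xi)) = 0).
    { apply (Rmult_eq_reg_r (t2 - t1)); [|lra]. lra. }
    apply Rmult_integral in Hxi0. destruct Hxi0 as [H0|H0]. specialize (Hom xi); lra.
    assert (Ht1 : th t1 <= th xi) by (apply (th_le th om); auto; lra).
    assert (Ht2 : th xi <= th t2) by (apply (th_le th om); auto; lra).
    assert (Cx : 1/2 < cos (beta - th xi)) by (apply (cos_mid (beta - th t2) _ (beta - th t1)); lra).
    pose proof (HwB xi) as Hw. apply abs_btw in Hw. nra. }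
  intros t1 t2 W1 W2 E1 E2.
  destruct (Rtotal_order t1 t2) as [H|[H|H]]; auto; exfalso.
  - apply (Hlt t1 t2); auto.
  - apply (Hlt t2 t1); auto.
Qed.

Lemma win_exists (th om m w : R -> R) beta r B tlo thi :
  (forall t, is_derive th t (om t)) -> (forall t, is_derive m t (om t * w t)) -> (forall t, Rabs (m t) <= B) ->
  B < r -> tlo < thi -> th tlo = beta - PI/2 -> th thi = beta + PI/2 ->
  exists t, tlo < t < thi /\ r * sin (beta - th t) + m t = 0.
Proof.
  intros Hth Hm HmB Hr Hlh E1 E2.
  set (G := fun t => r * sin (beta - th t) + m t).
  assert (HGc : continuity G) by (apply (cont_derive G (fun t => om t * (w t - r * cos (beta - th t)))); intro; apply dG; auto).
  assert (G1 : 0 < G tlo).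
  { unfold G. rewrite E1. replace (beta - (beta - PI/2)) with (PI/2) by ring. rewrite sin_PI2.
    pose proof (HmB tlo) as H. apply abs_btw in H. lra. }
  assert (G2 : G thi < 0).
  { unfold G. rewrite E2. replace (beta - (beta + PI/2)) with (- (PI/2)) by ring. rewrite sin_neg, sin_PI2.
    pose proof (HmB thi) as H. apply abs_btw in H. lra. }
  destruct (IVT_cor G tlo thi HGc (Rlt_le _ _ Hlh)) as [z [Hz Ez]]. nra.
  exists z. split; [|exact Ez].
  split; [destruct (Req_dec z tlo); [subst; lra|lra] | destruct (Req_dec z thi); [subst; lra|lra]].
Qed.

Lemma side_est (th om Hb rho : R -> R) beta Lr c :
  (forall t, is_derive th t (om t)) -> (forall t, c <= om t) -> 0 < c ->
  (forall t, is_derive Hb t (rho t * sin (th t - beta))) -> (forall t, rho t <= Lr) -> 0 <= Lr ->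
  forall tb ts, th tb = beta -> beta - PI/2 <= th ts <= beta + PI/2 ->
  Hb ts - Hb tb <= Lr / c * (1 - cos (beta - th ts)).
Proof.
  intros Hth Hom Hc HHb Hrho HL tb ts Etb Wts.
  assert (Hom' : forall t, 0 < om t) by (intro t; specialize (Hom t); lra).
  set (K := fun t => Hb t + Lr / c * cos (beta - th t)).
  set (dK := fun t => sin (th t - beta) * (rho t - Lr / c * om t)).
  assert (HdK : forall t, is_derive K t (dK t)).
  { intro t. unfold K, dK. auto_derive.
    - split; [eexists; apply HHb|]. split; [eexists; apply Hth|]. exact I.
    - replace (Derive (fun x => th x) t) with (om t) by (symmetry; apply is_derive_unique; auto).
      replace (Derive (fun x => Hb x) t) with (rho t * sin (th t - beta)) by (symmetry; apply is_derive_unique; auto).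
      replace (beta + - th t) with (- (th t - beta)) by ring. rewrite sin_neg. ring. }
  assert (Hneg : forall t, rho t - Lr / c * om t <= 0).
  { intro t. specialize (Hrho t). specialize (Hom t).
    assert (Lr / c * c <= Lr / c * om t) by (apply Rmult_le_compat_l; auto; apply Rdiv_le_0_compat; lra).
    replace (Lr / c * c) with Lr in H by (field; lra). lra. }
  assert (HK : K ts <= K tb).
  { destruct (Rle_or_lt tb ts) as [H|H].
    - apply (mono_down K dK tb ts H). intros; apply HdK.
      intros t Ht. unfold dK. 
      assert (th tb <= th t) by (apply (th_le th om); auto; lra).
      assert (th t <= th ts) by (apply (th_le th om); auto; lra).
      assert (0 <= sin (th t - beta)) by (apply sin_ge_0; lra).
      specialize (Hneg t). nra.
    - apply (mono_up K dK ts tb (Rlt_le _ _ H)). intros; apply HdK.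
      intros t Ht. unfold dK.
      assert (th ts <= th t) by (apply (th_le th om); auto; lra).
      assert (th t <= th tb) by (apply (th_le th om); auto; lra).
      assert (0 <= sin (beta - th t)) by (apply sin_ge_0; lra).
      replace (th t - beta) with (- (beta - th t)) by ring. rewrite sin_neg.
      specialize (Hneg t). nra. }
  unfold K in HK. rewrite Etb in HK. replace (beta - beta) with 0 in HK by ring. rewrite cos_0 in HK. lra.
Qed.

Lemma cot_acos c : -1 < c < 1 -> cot (acos c / 2) = (1 + c) / sqrt (1 - c²).
Proof.
  intro Hc. set (x := acos c).
  assert (Hx : 0 <= x <= PI) by apply acos_bound.
  assert (Hcx : cos x = c) by (apply cos_acos; lra).
  assert (Hsx : sin x = sqrt (1 - c²)) by (apply sin_acos; lra).
  assert (Hx0 : x <> 0) by (intro E; rewrite E, cos_0 in Hcx; lra).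
  assert (HxP : x <> PI) by (intro E; rewrite E, cos_PI in Hcx; lra).
  assert (Hs : 0 < sin (x / 2)) by (apply sin_gt_0; lra).
  assert (Hco : 0 < cos (x / 2)) by (apply cos_gt_0; lra).
  rewrite <- Hsx, <- Hcx. replace x with (2 * (x / 2)) at 2 3 by field.
  rewrite sin_2a, cos_2a_cos. unfold cot. field. lra.
Qed.

Lemma sqrt_sq_abs x : sqrt (x ^ 2) = Rabs x.
Proof. rewrite <- sqrt_Rsqr_abs. f_equal. unfold Rsqr. ring. Qed.

Lemma C_A_formula ax ay px py qx qy :
  let a1 := px - ax in let a2 := py - ay in let b1 := qx - ax in let b2 := qy - ay in
  let na := sqrt (a1 ^ 2 + a2 ^ 2) in let nb := sqrt (b1 ^ 2 + b2 ^ 2) in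
  let dd := a1 * b2 - a2 * b1 in
  0 < na -> 0 < nb -> dd <> 0 ->
  C_A ax ay px py qx qy = (na * nb + (a1 * b1 + a2 * b2)) / Rabs dd * (/ na + / nb).
Proof.
  intros a1 a2 b1 b2 na nb dd Ha Hb Hd.
  assert (Ea : na * na = a1 ^ 2 + a2 ^ 2) by (apply sqrt_sqrt; nra).
  assert (Eb : nb * nb = b1 ^ 2 + b2 ^ 2) by (apply sqrt_sqrt; nra).
  set (c := (a1 * b1 + a2 * b2) / (na * nb)).
  assert (Hid : (na * nb) ^ 2 = (a1 * b1 + a2 * b2) ^ 2 + dd ^ 2).
  { replace ((na*nb)^2) with ((na*na)*(nb*nb)) by ring. rewrite Ea, Eb. unfold dd. ring. }
  assert (Hdd2 : 0 < dd ^ 2) by (apply pow2_gt_0 ; auto).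
  assert (Hc2 : 1 - c² = (dd / (na * nb)) ^ 2).
  { unfold c, Rsqr.
    replace (1 - (a1 * b1 + a2 * b2) / (na * nb) * ((a1 * b1 + a2 * b2) / (na * nb))) with
      (((na*nb)^2 - (a1*b1+a2*b2)^2)/(na*nb)^2) by (field; split; lra).
    rewrite Hid at 1. field. split; lra. }
  assert (Hc : -1 < c < 1).
  { assert (c ^ 2 < 1) by (unfold Rsqr in Hc2; assert (0 < (dd/(na*nb))^2) by (apply pow2_gt_0; unfold Rdiv; apply Rmult_integral_contrapositive; split; auto; apply Rinv_neq_0_compat; nra); nra).
    split; nra. }
  unfold C_A, angle_at, dist2, dot2. fold a1 a2 b1 b2 na nb. fold c.
  rewrite cot_acos by auto. rewrite Hc2, sqrt_sq_abs.
  unfold c. rewrite Rabs_div, (Rabs_pos_eq (na * nb)) by nra.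
  field. split; [|split]; try lra. apply Rabs_no_R0; auto.
Qed.

Lemma abs_between x d : Rabs x <= d -> -d <= x <= d.
Proof. intro H. pose proof (Rle_abs x). pose proof (Rle_abs (-x)). rewrite Rabs_Ropp in H1. lra. Qed.

Lemma expr_close W eps : 0 < W -> 0 < eps -> exists d, 0 < d /\
  forall a1 a2 a3 a4, Rabs (a1 - 1) <= d -> Rabs (a2 - 1) <= d -> Rabs (a3 - 1) <= d -> Rabs (a4 - W) <= d ->
  Rabs ((a1 * a2 + a3) * (a1 + a2) / (a4 * (a1 * a2)) - 4 / W) < eps.
Proof.
  intros HW He.
  set (K := 8 * (28 * W + 16)).
  assert (HK : 0 < K) by (unfold K; lra).
  exists (Rmin (1/6) (Rmin (W/2) (eps * W ^ 2 / K))).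
  assert (Hd1 : Rmin (1/6) (Rmin (W/2) (eps * W ^ 2 / K)) <= 1/6) by apply Rmin_l.
  assert (Hd2 : Rmin (1/6) (Rmin (W/2) (eps * W ^ 2 / K)) <= W/2) by (eapply Rle_trans; [apply Rmin_r|apply Rmin_l]).
  assert (Hd3 : Rmin (1/6) (Rmin (W/2) (eps * W ^ 2 / K)) <= eps * W ^ 2 / K) by (eapply Rle_trans; [apply Rmin_r|apply Rmin_r]).
  assert (Hd0 : 0 < Rmin (1/6) (Rmin (W/2) (eps * W ^ 2 / K))).
  { apply Rmin_glb_lt; [lra|]. apply Rmin_glb_lt; [lra|]. apply Rdiv_lt_0_compat; [|lra].
    apply Rmult_lt_0_compat; [lra|]. apply pow2_gt_0; lra. }
  set (d := Rmin (1/6) (Rmin (W/2) (eps * W ^ 2 / K))) in *.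
  split; auto.
  intros a1 a2 a3 a4 H1 H2 H3 H4.
  apply abs_between in H1, H2, H3, H4.
  assert (P12 : -3 * d <= a1 * a2 - 1 <= 3 * d) by (split; nra).
  assert (HX : -4 * d <= a1 * a2 + a3 - 2 <= 4 * d) by lra.
  assert (HY : -2 * d <= a1 + a2 - 2 <= 2 * d) by lra.
  assert (HN : -16 * d <= (a1 * a2 + a3) * (a1 + a2) - 4 <= 16 * d).
  { replace ((a1 * a2 + a3) * (a1 + a2) - 4) with ((a1 * a2 + a3 - 2) * (a1 + a2) + 2 * (a1 + a2 - 2)) by ring.
    split; nra. }
  assert (HD : - d * (3 * W + 4) <= a4 * (a1 * a2) - W <= d * (3 * W + 4)).
  { replace (a4 * (a1 * a2) - W) with ((a1 * a2 - 1) * a4 + (a4 - W)) by ring. split; nra. }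
  assert (HDp : W / 4 <= a4 * (a1 * a2)) by nra.
  set (N := (a1 * a2 + a3) * (a1 + a2)) in *. set (D := a4 * (a1 * a2)) in *.
  replace (N / D - 4 / W) with (((N - 4) * W - 4 * (D - W)) / (D * W)) by (field; lra).
  rewrite Rabs_div by nra. rewrite (Rabs_pos_eq (D * W)) by nra.
  apply (Rle_lt_trans _ ((16 * d * W + 4 * (d * (3 * W + 4))) / (W / 4 * W))).
  - apply Rmult_le_compat.
    + apply Rabs_pos.
    + left; apply Rinv_0_lt_compat; nra.
    + apply Rabs_le. split; nra.
    + apply Rinv_le_contravar; nra.
  - replace ((16 * d * W + 4 * (d * (3 * W + 4))) / (W / 4 * W)) with (d * (K / 2) / W ^ 2) by (unfold K; field; lra).
    apply (Rmult_lt_reg_r (W ^ 2)). apply pow2_gt_0; lra.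
    replace (d * (K / 2) / W ^ 2 * W ^ 2) with (d * (K/2)) by (field; lra).
    apply (Rle_lt_trans _ (eps * W ^ 2 / K * (K / 2))).
    + apply Rmult_le_compat_r; lra.
    + replace (eps * W ^ 2 / K * (K / 2)) with (eps * W ^ 2 / 2) by (field; lra).
      assert (0 < eps * W ^ 2) by (apply Rmult_lt_0_compat; auto; apply pow2_gt_0; lra). lra.
Qed.

Lemma sq_le_abs x y : 0 <= y -> x ^ 2 <= y ^ 2 -> Rabs x <= y.
Proof. intros Hy H. apply Rabs_le. split; nra. Qed.

Lemma final_est (Mv W E : R) : 0 <= Mv -> 0 < W -> 0 <= E -> forall eps, 0 < eps -> exists R0, 
  forall r psi ox oy px py qx qy, R0 < r ->
  (px - ox) ^ 2 + (py - oy) ^ 2 <= Mv -> (qx - ox) ^ 2 + (qy - oy) ^ 2 <= Mv ->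
  Rabs (((qx - ox) * (- sin psi) + (qy - oy) * cos psi) - ((px - ox) * (- sin psi) + (py - oy) * cos psi) - W) <= E / (r * r) ->
  Rabs (C_A (ox + r * cos psi) (oy + r * sin psi) px py qx qy - 4 / W) < eps.
Proof.
  intros HM HW HE eps Heps.
  destruct (expr_close W eps HW Heps) as [d0 [Hd0 Hcl]].
  set (d := Rmin d0 (Rmin (1/6) (W/2))).
  assert (Hdd0 : d <= d0) by apply Rmin_l.
  assert (Hd16 : d <= 1/6) by (eapply Rle_trans; [apply Rmin_r|apply Rmin_l]).
  assert (HdW : d <= W/2) by (eapply Rle_trans; [apply Rmin_r|apply Rmin_r]).
  assert (Hd : 0 < d) by (apply Rmin_glb_lt; auto; apply Rmin_glb_lt; lra).
  set (s := sqrt Mv).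
  assert (Hs : 0 <= s) by apply sqrt_pos.
  assert (Hs2 : s ^ 2 = Mv) by (unfold s; rewrite <- Rsqr_pow2; apply Rsqr_sqrt; auto).
  set (K := s ^ 2 + 2 * s + E).
  assert (HK : 0 <= K) by (unfold K; nra).
  exists (Rmax 1 (K / d)).
  intros r psi ox oy px py qx qy Hr Hp Hq He.
  assert (Hr1 : 1 < r) by (eapply Rle_lt_trans; [apply Rmax_l|exact Hr]).
  assert (HrK : K / d < r) by (eapply Rle_lt_trans; [apply Rmax_r|exact Hr]).
  assert (HKr : K / r <= d).
  { apply (Rmult_le_reg_r r); [lra|]. replace (K / r * r) with K by (field; lra).
    apply (Rmult_lt_compat_r d) in HrK; auto. replace (K / d * d) with K in HrK by (field; lra). lra. }
  set (c := cos psi) in *. set (sn := sin psi) in *.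
  assert (Hcs : sn ^ 2 + c ^ 2 = 1) by (unfold sn, c; rewrite <- !Rsqr_pow2; apply sin2_cos2).
  set (p1 := px - ox) in *. set (p2 := py - oy) in *. set (q1 := qx - ox) in *. set (q2 := qy - oy) in *.
  set (ax := ox + r * c). set (ay := oy + r * sn).
  set (a1 := px - ax). set (a2 := py - ay). set (b1 := qx - ax). set (b2 := qy - ay).
  assert (Ea1 : a1 = p1 - r * c) by (unfold a1, p1, ax; ring).
  assert (Ea2 : a2 = p2 - r * sn) by (unfold a2, p2, ay; ring).
  assert (Eb1 : b1 = q1 - r * c) by (unfold b1, q1, ax; ring).
  assert (Eb2 : b2 = q2 - r * sn) by (unfold b2, q2, ay; ring).
  assert (Hpu : Rabs (p1 * c + p2 * sn) <= s).
  { apply sq_le_abs; auto. rewrite Hs2.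
    assert ((p1 * c + p2 * sn) ^ 2 + (- p1 * sn + p2 * c) ^ 2 = (p1 ^ 2 + p2 ^ 2) * (sn ^ 2 + c ^ 2)) by ring.
    rewrite Hcs in H. pose proof (pow2_ge_0 (- p1 * sn + p2 * c)). lra. }
  assert (Hqu : Rabs (q1 * c + q2 * sn) <= s).
  { apply sq_le_abs; auto. rewrite Hs2.
    assert ((q1 * c + q2 * sn) ^ 2 + (- q1 * sn + q2 * c) ^ 2 = (q1 ^ 2 + q2 ^ 2) * (sn ^ 2 + c ^ 2)) by ring.
    rewrite Hcs in H. pose proof (pow2_ge_0 (- q1 * sn + q2 * c)). lra. }
  assert (Hpq : Rabs (p1 * q1 + p2 * q2) <= s ^ 2).
  { apply sq_le_abs; [nra|]. 
    assert ((p1 * q1 + p2 * q2) ^ 2 + (p1 * q2 - p2 * q1) ^ 2 = (p1 ^ 2 + p2 ^ 2) * (q1 ^ 2 + q2 ^ 2)) by ring.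
    rewrite Hs2. assert ((p1 ^ 2 + p2 ^ 2) * (q1 ^ 2 + q2 ^ 2) <= Mv * Mv).
    { apply Rmult_le_compat; nra. } pose proof (pow2_ge_0 (p1 * q2 - p2 * q1)). nra. }
  assert (Hdpq : Rabs (p1 * q2 - p2 * q1) <= s ^ 2).
  { apply sq_le_abs; [nra|]. 
    assert ((p1 * q1 + p2 * q2) ^ 2 + (p1 * q2 - p2 * q1) ^ 2 = (p1 ^ 2 + p2 ^ 2) * (q1 ^ 2 + q2 ^ 2)) by ring.
    rewrite Hs2. assert ((p1 ^ 2 + p2 ^ 2) * (q1 ^ 2 + q2 ^ 2) <= Mv * Mv).
    { apply Rmult_le_compat; nra. } pose proof (pow2_ge_0 (p1 * q1 + p2 * q2)). nra. }
  apply abs_between in Hpu, Hqu, Hpq, Hdpq.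
  set (na := sqrt (a1 ^ 2 + a2 ^ 2)). set (nb := sqrt (b1 ^ 2 + b2 ^ 2)).
  assert (Hna0 : 0 <= na) by apply sqrt_pos. assert (Hnb0 : 0 <= nb) by apply sqrt_pos.
  assert (Ena : na ^ 2 = a1 ^ 2 + a2 ^ 2) by (unfold na; rewrite <- Rsqr_pow2; apply Rsqr_sqrt; nra).
  assert (Enb : nb ^ 2 = b1 ^ 2 + b2 ^ 2) by (unfold nb; rewrite <- Rsqr_pow2; apply Rsqr_sqrt; nra).
  assert (Ena' : na ^ 2 - r ^ 2 = p1 ^ 2 + p2 ^ 2 - 2 * r * (p1 * c + p2 * sn)).
  { rewrite Ena, Ea1, Ea2. replace (r ^ 2) with (r ^ 2 * (sn ^ 2 + c ^ 2)) at 1 by (rewrite Hcs; ring). ring. }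
  assert (Enb' : nb ^ 2 - r ^ 2 = q1 ^ 2 + q2 ^ 2 - 2 * r * (q1 * c + q2 * sn)).
  { rewrite Enb, Eb1, Eb2. replace (r ^ 2) with (r ^ 2 * (sn ^ 2 + c ^ 2)) at 1 by (rewrite Hcs; ring). ring. }
  assert (Ha1 : Rabs (na / r - 1) <= d).
  { apply Rle_trans with (K / r); auto.
    assert (Hb : Rabs (na ^ 2 - r ^ 2) <= s ^ 2 + 2 * r * s) by (apply Rabs_le; rewrite Ena'; split; nra).
    replace (na / r - 1) with ((na ^ 2 - r ^ 2) / (r * (na + r))) by (field; lra).
    rewrite Rabs_div by nra. rewrite (Rabs_pos_eq (r * (na + r))) by nra.
    apply (Rmult_le_reg_r (r * (na + r))); [nra|]. 
    replace (Rabs (na ^ 2 - r ^ 2) / (r * (na + r)) * (r * (na + r))) with (Rabs (na ^ 2 - r ^ 2)) by (field; nra).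
    replace (K / r * (r * (na + r))) with (K * (na + r)) by (field; lra).
    unfold K. nra. }
  assert (Ha2 : Rabs (nb / r - 1) <= d).
  { apply Rle_trans with (K / r); auto.
    assert (Hb : Rabs (nb ^ 2 - r ^ 2) <= s ^ 2 + 2 * r * s) by (apply Rabs_le; rewrite Enb'; split; nra).
    replace (nb / r - 1) with ((nb ^ 2 - r ^ 2) / (r * (nb + r))) by (field; lra).
    rewrite Rabs_div by nra. rewrite (Rabs_pos_eq (r * (nb + r))) by nra.
    apply (Rmult_le_reg_r (r * (nb + r))); [nra|]. 
    replace (Rabs (nb ^ 2 - r ^ 2) / (r * (nb + r)) * (r * (nb + r))) with (Rabs (nb ^ 2 - r ^ 2)) by (field; nra).
    replace (K / r * (r * (nb + r))) with (K * (nb + r)) by (field; lra).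
    unfold K. nra. }
  set (dt := a1 * b1 + a2 * b2).
  assert (Edt : dt - r ^ 2 = p1 * q1 + p2 * q2 - r * (p1 * c + p2 * sn) - r * (q1 * c + q2 * sn)).
  { unfold dt. rewrite Ea1, Ea2, Eb1, Eb2. replace (r ^ 2) with (r ^ 2 * (sn ^ 2 + c ^ 2)) at 1 by (rewrite Hcs; ring). ring. }
  assert (Ha3 : Rabs (dt / r ^ 2 - 1) <= d).
  { apply Rle_trans with (K / r); auto.
    replace (dt / r ^ 2 - 1) with ((dt - r ^ 2) / r ^ 2) by (field; lra).
    rewrite Rabs_div by nra. rewrite (Rabs_pos_eq (r ^ 2)) by nra.
    apply (Rmult_le_reg_r (r ^ 2)); [nra|].
    replace (Rabs (dt - r ^ 2) / r ^ 2 * r ^ 2) with (Rabs (dt - r ^ 2)) by (field; nra).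
    replace (K / r * r ^ 2) with (K * r) by (field; lra).
    rewrite Edt. apply Rabs_le. unfold K. split; nra. }
  set (dd := a1 * b2 - a2 * b1).
  set (e := (q1 * - sn + q2 * c) - (p1 * - sn + p2 * c) - W) in *.
  assert (Edd : dd + r * W = (p1 * q2 - p2 * q1) - r * e).
  { unfold dd, e. rewrite Ea1, Ea2, Eb1, Eb2. ring. }
  assert (Hre : Rabs (r * e) <= E).
  { rewrite Rabs_mult, Rabs_pos_eq by lra.
    apply Rle_trans with (r * (E / (r * r))). apply Rmult_le_compat_l; lra.
    replace (r * (E / (r * r))) with (E / r) by (field; lra).
    apply (Rmult_le_reg_r r); [lra|]. replace (E / r * r) with E by (field; lra). nra. }
  apply abs_between in Hre.
  assert (Ha4 : Rabs (Rabs dd / r - W) <= d).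
  { apply Rle_trans with (K / r); auto.
    assert (Hb : Rabs (dd + r * W) <= K) by (apply Rabs_le; rewrite Edd; unfold K; split; nra).
    assert (Hb2 : Rabs (Rabs dd - r * W) <= K).
    { eapply Rle_trans; [|exact Hb]. replace (dd + r * W) with (dd - (- (r * W))) by ring.
      rewrite <- (Rabs_pos_eq (r * W)) at 1 by nra. rewrite <- (Rabs_Ropp (r * W)).
      apply Rabs_triang_inv2. }
    replace (Rabs dd / r - W) with ((Rabs dd - r * W) / r) by (field; lra).
    rewrite Rabs_div by lra. rewrite (Rabs_pos_eq r) by lra.
    unfold Rdiv. apply Rmult_le_compat_r; [left; apply Rinv_0_lt_compat; lra|]. auto. }
  assert (Hnap : 0 < na).
  { apply abs_between in Ha1. assert (0 < na / r) by lra. 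
    replace na with (na / r * r) by (field; lra). nra. }
  assert (Hnbp : 0 < nb).
  { apply abs_between in Ha2. assert (0 < nb / r) by lra. 
    replace nb with (nb / r * r) by (field; lra). nra. }
  assert (Hddp : dd <> 0).
  { intro E0. rewrite E0, Rabs_R0 in Ha4. apply abs_between in Ha4. lra. }
  rewrite (C_A_formula ax ay px py qx qy); fold a1 a2 b1 b2 na nb dd dt; auto.
  specialize (Hcl (na / r) (nb / r) (dt / r ^ 2) (Rabs dd / r) ltac:(lra) ltac:(lra) ltac:(lra) ltac:(lra)).
  replace ((na * nb + dt) / Rabs dd * (/ na + / nb)) with
    ((na / r * (nb / r) + dt / r ^ 2) * (na / r + nb / r) / (Rabs dd / r * (na / r * (nb / r)))).
  exact Hcl.
  field. split; [lra|]. split; [lra|]. split; [apply Rabs_no_R0; auto|lra].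
Qed.

Lemma sq_pos x : x <> 0 -> 0 < x ^ 2.
Proof. intro H. replace (x ^ 2) with (x * x) by ring. destruct (Rlt_or_le 0 x); [nra|].
  assert (x < 0) by lra. nra. Qed.

Lemma sum_sq_pos a b : (a <> 0 \/ b <> 0) -> 0 < a ^ 2 + b ^ 2.
Proof. intros [H|H]; apply sq_pos in H; pose proof (pow2_ge_0 a); pose proof (pow2_ge_0 b); lra. Qed.

Lemma C_A_sym ax ay px py qx qy : C_A ax ay px py qx qy = C_A ax ay qx qy px py.
Proof.
  unfold C_A, angle_at, dot2. rewrite (Rmult_comm (dist2 ax ay px py)), (Rplus_comm (/ dist2 ax ay px py)).
  replace ((px - ax) * (qx - ax) + (py - ay) * (qy - ay)) with ((qx - ax) * (px - ax) + (qy - ay) * (py - ay)) by ring.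
  reflexivity.
Qed.

Lemma one_minus_cos x r m Mv : 0 <= cos x -> r * sin x = m -> m ^ 2 <= Mv -> 0 < r ->
  1 - cos x <= Mv / (r * r).
Proof.
  intros Hc E Hm Hr. pose proof (sin2_cos2 x) as H. unfold Rsqr in H. pose proof (COS_bound x) as [_ Hc1].
  assert (1 - cos x <= sin x * sin x) by nra.
  assert (sin x * sin x <= Mv / (r * r)).
  { apply (Rmult_le_reg_r (r * r)); [nra|]. replace (Mv / (r * r) * (r * r)) with Mv by (field; lra).
    replace (sin x * sin x * (r * r)) with (m ^ 2) by (rewrite <- E; ring). auto. }
  lra.
Qed.

Section Core.
Variables (gx gy : R -> R) (T ox oy : R).
Hypothesis HT : 0 < T.
Hypothesis Hsx : forall n t, ex_derive_n gx n t.
Hypothesis Hsy : forall n t, ex_derive_n gy n t.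
Hypothesis Hpx : forall t, gx (t + T) = gx t.
Hypothesis Hpy : forall t, gy (t + T) = gy t.
Hypothesis Hinj : forall s t, 0 < t - s < T -> gx s = gx t -> gy s = gy t -> False.
Hypothesis Hk : forall t, 0 < curv_num gx gy t.
Hypothesis HD : forall t, 0 < (gx t - ox) * Derive gy t - (gy t - oy) * Derive gx t.

Let x1 := Derive gx.
Let y1 := Derive gy.
Let x2 := Derive x1.
Let y2 := Derive y1.

Lemma dgx t : is_derive gx t (x1 t).
Proof. apply Derive_correct. exact (Hsx 1 t). Qed.
Lemma dgy t : is_derive gy t (y1 t).
Proof. apply Derive_correct. exact (Hsy 1 t). Qed.
Lemma dx1 t : is_derive x1 t (x2 t).
Proof. apply Derive_correct. exact (Hsx 2 t). Qed.
Lemma dy1 t : is_derive y1 t (y2 t).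
Proof. apply Derive_correct. exact (Hsy 2 t). Qed.
Lemma ex2 t : ex_derive x2 t.
Proof. exact (Hsx 3 t). Qed.
Lemma ey2 t : ex_derive y2 t.
Proof. exact (Hsy 3 t). Qed.

Lemma kappa_eq t : curv_num gx gy t = x1 t * y2 t - y1 t * x2 t.
Proof. reflexivity. Qed.

Lemma px1 t : x1 (t + T) = x1 t.
Proof. apply (per_deriv gx x1 T Hpx dgx). Qed.
Lemma py1 t : y1 (t + T) = y1 t.
Proof. apply (per_deriv gy y1 T Hpy dgy). Qed.
Lemma px2 t : x2 (t + T) = x2 t.
Proof. apply (per_deriv x1 x2 T px1 dx1). Qed.
Lemma py2 t : y2 (t + T) = y2 t.
Proof. apply (per_deriv y1 y2 T py1 dy1). Qed.

Lemma speed_pos t : 0 < x1 t ^ 2 + y1 t ^ 2.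
Proof.
  pose proof (Hk t) as H. rewrite kappa_eq in H. apply sum_sq_pos.
  destruct (Req_dec (x1 t) 0) as [E|E]; auto.
  destruct (Req_dec (y1 t) 0) as [E'|E']; auto.
  rewrite E, E' in H. lra.
Qed.

Lemma rad_pos t : 0 < (gx t - ox) ^ 2 + (gy t - oy) ^ 2.
Proof.
  pose proof (HD t) as H. apply sum_sq_pos.
  destruct (Req_dec (gx t - ox) 0) as [E|E]; auto.
  destruct (Req_dec (gy t - oy) 0) as [E'|E']; auto.
  rewrite E, E' in H. lra.
Qed.


Definition omg t := (x1 t * y2 t - y1 t * x2 t) / (x1 t ^ 2 + y1 t ^ 2).

Lemma omg_pos t : 0 < omg t.
Proof. unfold omg. apply Rdiv_lt_0_compat. rewrite <- kappa_eq. apply Hk. apply speed_pos. Qed.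

Lemma omg_per t : omg (t + T) = omg t.
Proof. unfold omg. rewrite px1, py1, px2, py2. auto. Qed.

Lemma omg_cont : continuity omg.
Proof.
  intro t. apply (is_derive_cont omg (Derive omg t)). apply Derive_correct.
  unfold omg. pose proof (speed_pos t). auto_derive.
  split; [eexists; apply dx1|]. split; [apply ey2|]. split; [eexists; apply dy1|]. split; [apply ex2|].
  split; [eexists; apply dx1|]. split; [eexists; apply dy1|]. split; [|exact I].
  replace (x1 t * (x1 t * 1) + y1 t * (y1 t * 1)) with (x1 t ^ 2 + y1 t ^ 2) by ring. lra.
Qed.

Let vx t := gx t - ox.
Let vy t := gy t - oy.

Lemma dvx t : is_derive vx t (x1 t).
Proof. unfold vx. replace (x1 t) with (x1 t - 0) by ring. apply (is_derive_minus gx (fun _ => ox)). apply dgx.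
  apply (is_derive_const ox t : is_derive (fun _ => ox) t 0). Qed.
Lemma dvy t : is_derive vy t (y1 t).
Proof. unfold vy. replace (y1 t) with (y1 t - 0) by ring. apply (is_derive_minus gy (fun _ => oy)). apply dgy.
  apply (is_derive_const oy t : is_derive (fun _ => oy) t 0). Qed.

Definition dal t := (vx t * y1 t - vy t * x1 t) / (vx t ^ 2 + vy t ^ 2).

Lemma dal_pos t : 0 < dal t.
Proof. unfold dal. apply Rdiv_lt_0_compat. apply HD. apply rad_pos. Qed.

Lemma theta_exists : exists th : R -> R,
  (forall t, is_derive th t (omg t)) /\
  (forall t, x1 t = sqrt (x1 t ^ 2 + y1 t ^ 2) * cos (th t) /\ y1 t = sqrt (x1 t ^ 2 + y1 t ^ 2) * sin (th t)) /\
  (forall t, th (t + T) = th t + 2 * PI).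
Proof.
  destruct (lift x1 y1 x2 y2 dx1 dy1 ex2 ey2 speed_pos) as [th [Hth Hpth]].
  destruct (lift vx vy x1 y1 dvx dvy (fun t => ex_intro _ _ (dx1 t)) (fun t => ex_intro _ _ (dy1 t)) rad_pos) as [al [Hal Hpal]].
  destruct (angle_period x1 y1 th omg T px1 py1 Hth omg_per speed_pos Hpth) as [kt Hkt].
  assert (Hvxp : forall t, vx (t + T) = vx t) by (intro; unfold vx; rewrite Hpx; auto).
  assert (Hvyp : forall t, vy (t + T) = vy t) by (intro; unfold vy; rewrite Hpy; auto).
  assert (Hdalp : forall t, dal (t + T) = dal t) by (intro; unfold dal; rewrite Hvxp, Hvyp, px1, py1; auto).
  destruct (angle_period vx vy al dal T Hvxp Hvyp Hal Hdalp rad_pos Hpal) as [ka Hka].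
  assert (Hdalc : continuity dal).
  { intro t. apply (is_derive_cont dal (Derive dal t)). apply Derive_correct.
    unfold dal. pose proof (rad_pos t). auto_derive.
    split; [eexists; apply dvx|]. split; [eexists; apply dy1|]. split; [eexists; apply dvy|]. split; [eexists; apply dx1|].
    split; [eexists; apply dvx|]. split; [eexists; apply dvy|]. split; [|exact I].
    fold (vx t) (vy t).
    replace (vx t * (vx t * 1) + vy t * (vy t * 1)) with ((gx t - ox) ^ 2 + (gy t - oy) ^ 2) by (unfold vx, vy; ring). lra. }
  assert (Hka1 : ka = 1%Z).
  { apply (winding_one vx vy al dal T ka HT Hvxp Hvyp (cont_derive vx x1 dvx) (cont_derive vy y1 dvy)
       Hal Hdalp Hdalc dal_pos Hpal Hka).
    intros s t Hst E1 E2. apply (Hinj s t Hst); unfold vx, vy in *; lra. }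
  subst ka.
  exists th. split; [auto|]. split; [auto|].
  set (g := fun t => th t - al t).
  assert (Hsg : forall t, 0 < sin (g t)).
  { intro t. unfold g. rewrite sin_minus.
    destruct (Hpth t) as [A1 B1]. destruct (Hpal t) as [A2 B2].
    pose proof (HD t) as H. fold (vx t) (vy t) in H. fold (x1 t) (y1 t) in H.
    assert (r1 : 0 < sqrt (x1 t ^ 2 + y1 t ^ 2)) by (apply sqrt_lt_R0, speed_pos).
    assert (r2 : 0 < sqrt (vx t ^ 2 + vy t ^ 2)) by (apply sqrt_lt_R0, rad_pos).
    set (q1 := sqrt (x1 t ^ 2 + y1 t ^ 2)) in *. set (q2 := sqrt (vx t ^ 2 + vy t ^ 2)) in *.
    rewrite A1, B1, A2, B2 in H.
    replace (q2 * cos (al t) * (q1 * sin (th t)) - q2 * sin (al t) * (q1 * cos (th t))) with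
      ((q2 * q1) * (sin (th t) * cos (al t) - cos (th t) * sin (al t))) in H by ring.
    apply (Rmult_lt_reg_l (q2 * q1)). apply Rmult_lt_0_compat; auto. rewrite Rmult_0_r. lra. }
  assert (Hgc : continuity g) by (apply cont_minus; [apply (cont_derive th omg Hth)|apply (cont_derive al dal Hal)]).
  assert (HgT : g (0 + T) = g 0 + 2 * (IZR kt - 1) * PI) by (unfold g; rewrite Hkt, Hka; simpl; ring).
  pose proof PI_RGT_0 as Hpi.
  assert (Hkt1 : kt = 1%Z).
  { destruct (Z.lt_total kt 1) as [Hl|[He|Hl]]; auto; exfalso.
    - assert (IZR kt <= 0) by (apply IZR_le; lia).
      destruct (IVT_gen g 0 (0 + T) (g 0 - PI) Hgc) as [t [_ Et]].
      { rewrite HgT. rewrite Rmin_right, Rmax_left; nra. }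
      pose proof (Hsg 0) as H0. specialize (Hsg t). rewrite Et, sin_minus, sin_PI, cos_PI in Hsg. lra.
    - assert (2 <= IZR kt) by (apply IZR_le; lia).
      destruct (IVT_gen g 0 (0 + T) (g 0 + PI) Hgc) as [t [_ Et]].
      { rewrite HgT. rewrite Rmin_left, Rmax_right; nra. }
      pose proof (Hsg 0) as H0. specialize (Hsg t). rewrite Et, sin_plus, sin_PI, cos_PI in Hsg. lra. }
  intro t. rewrite Hkt, Hkt1. simpl. ring.
Qed.


Variable th : R -> R.
Hypothesis Hth : forall t, is_derive th t (omg t).
Hypothesis Hpth : forall t, x1 t = sqrt (x1 t ^ 2 + y1 t ^ 2) * cos (th t) /\ y1 t = sqrt (x1 t ^ 2 + y1 t ^ 2) * sin (th t).
Hypothesis Hthp : forall t, th (t + T) = th t + 2 * PI.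
Variable psi : R.

Let rho t := sqrt (x1 t ^ 2 + y1 t ^ 2).
Definition mm t := vx t * sin (th t) - vy t * cos (th t).
Definition ww t := vx t * cos (th t) + vy t * sin (th t).

Lemma rho_pos t : 0 < rho t.
Proof. apply sqrt_lt_R0, speed_pos. Qed.

Lemma dmm t : is_derive mm t (omg t * ww t).
Proof.
  unfold mm, ww. auto_derive.
  - split; [eexists; apply dvx|]. split; [eexists; apply Hth|]. split; [eexists; apply dvy|]. split; [eexists; apply Hth|]. exact I.
  - replace (Derive (fun x => th x) t) with (omg t) by (symmetry; apply is_derive_unique; auto).
    replace (Derive (fun x => vx x) t) with (x1 t) by (symmetry; apply is_derive_unique; apply dvx).
    replace (Derive (fun x => vy x) t) with (y1 t) by (symmetry; apply is_derive_unique; apply dvy).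
    destruct (Hpth t) as [A B]. fold (rho t) in A, B. rewrite A, B. ring.
Qed.

Lemma mm_ww t : mm t ^ 2 + ww t ^ 2 = vx t ^ 2 + vy t ^ 2.
Proof. unfold mm, ww. pose proof (sin2_cos2 (th t)) as H. unfold Rsqr in H.
  replace (vx t ^ 2 + vy t ^ 2) with ((vx t ^ 2 + vy t ^ 2) * (sin (th t) * sin (th t) + cos (th t) * cos (th t))) by (rewrite H; ring).
  ring. Qed.

Lemma vv_cont : continuity (fun t => vx t ^ 2 + vy t ^ 2).
Proof. apply cont_plus; apply cont_sq; [apply (cont_derive vx x1 dvx)|apply (cont_derive vy y1 dvy)]. Qed.

Lemma ss_cont : continuity (fun t => x1 t ^ 2 + y1 t ^ 2).
Proof. apply cont_plus; apply cont_sq; [apply (cont_derive x1 x2 dx1)|apply (cont_derive y1 y2 dy1)]. Qed.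

Lemma tang_eq r t : tang_det gx gy t (ox + r * cos psi) (oy + r * sin psi) = rho t * (r * sin (psi - th t) + mm t).
Proof.
  unfold tang_det, det2. fold (x1 t) (y1 t). destruct (Hpth t) as [A B]. fold (rho t) in A, B.
  rewrite A, B. unfold mm. rewrite sin_minus. unfold vx, vy. ring.
Qed.

Lemma dHb beta t : is_derive (fun t => gx t * (- sin beta) + gy t * cos beta) t (rho t * sin (th t - beta)).
Proof.
  auto_derive.
  - split; [eexists; apply dgx|]. split; [eexists; apply dgy|]. exact I.
  - replace (Derive (fun x => gx x) t) with (x1 t) by (symmetry; apply is_derive_unique; apply dgx).
    replace (Derive (fun x => gy x) t) with (y1 t) by (symmetry; apply is_derive_unique; apply dgy).
    destruct (Hpth t) as [A B]. fold (rho t) in A, B. rewrite A, B, sin_minus. ring.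
Qed.

Lemma th_Z (k : Z) t : th (t + IZR k * T) = th t + 2 * IZR k * PI.
Proof.
  pose proof (periodic_Z (fun t => th t - 2 * PI * t / T) T) as H.
  assert (Hp : forall t, th (t + T) - 2 * PI * (t + T) / T = th t - 2 * PI * t / T).
  { intro s. rewrite Hthp. field. lra. }
  specialize (H Hp k t). simpl in H. 
  replace (th (t + IZR k * T)) with (th (t + IZR k * T) - 2 * PI * (t + IZR k * T) / T + 2 * PI * (t + IZR k * T) / T) by ring.
  rewrite H. field. lra.
Qed.

Lemma th_cont : continuity th.
Proof. apply (cont_derive th omg Hth). Qed.

Lemma th_surj y : exists t, th t = y.
Proof.
  pose proof PI_RGT_0.
  destruct (reduce_mod (2 * PI) ltac:(lra) y (th 0)) as [k Hkk].
  destruct (IVT_gen th 0 (0 + T) (y + IZR k * (2 * PI)) th_cont) as [t [_ Et]].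
  { rewrite Hthp. rewrite Rmin_left, Rmax_right; lra. }
  exists (t + IZR (- k) * T). rewrite th_Z, Et, opp_IZR. ring.
Qed.

Lemma th_lt a b : a < b -> th a < th b.
Proof. apply (incr_strict th omg Hth omg_pos). Qed.

Lemma th_lt_inv a b : th a < th b -> a < b.
Proof. intro H. destruct (Rlt_or_le a b) as [|H']; auto.
  destruct (Req_dec a b). subst; lra. assert (th b < th a) by (apply th_lt; lra). lra. Qed.

Lemma th_le_inv a b : th a <= th b -> a <= b.
Proof. intro H. destruct (Rle_or_lt a b) as [|H']; auto. apply th_lt in H'. lra. Qed.

Definition HH t := gx t * (- sin psi) + gy t * cos psi.

Lemma HH_per (k : Z) t : HH (t + IZR k * T) = HH t.
Proof.
  apply (periodic_Z HH T). intro s. unfold HH. rewrite Hpx, Hpy. auto.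
Qed.


Lemma HH_bounds tmin tmax : th tmin = psi -> th tmax = psi + PI ->
  forall s, HH tmin <= HH s <= HH tmax.
Proof.
  intros E1 E2 s. pose proof PI_RGT_0.
  destruct (reduce_mod T HT s tmin) as [k Hkk].
  rewrite <- (HH_per k s). set (s' := s + IZR k * T) in *.
  assert (Htm : tmin < tmax) by (apply th_lt_inv; lra).
  assert (Htm2 : tmax < tmin + T) by (apply th_lt_inv; rewrite Hthp; lra).
  assert (HDH : forall t, is_derive HH t (rho t * sin (th t - psi))) by (intro; apply dHb).
  destruct (Rle_or_lt s' tmax) as [H1|H1].
  - assert (Hup : forall a b, tmin <= a -> a <= b -> b <= tmax -> HH a <= HH b).
    { intros a b Ha Hab Hb. apply (mono_up HH (fun t => rho t * sin (th t - psi)) a b Hab); [intros; apply HDH|].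
      intros t Ht. apply Rmult_le_pos; [left; apply rho_pos|].
      assert (th tmin <= th t) by (apply (th_le th omg Hth omg_pos); lra).
      assert (th t <= th tmax) by (apply (th_le th omg Hth omg_pos); lra).
      apply sin_ge_0; lra. }
    split; apply Hup; lra.
  - assert (Hdn : forall a b, tmax <= a -> a <= b -> b <= tmin + T -> HH b <= HH a).
    { intros a b Ha Hab Hb. apply (mono_down HH (fun t => rho t * sin (th t - psi)) a b Hab); [intros; apply HDH|].
      intros t Ht. 
      assert (th tmax <= th t) by (apply (th_le th omg Hth omg_pos); lra).
      assert (Hq : th t <= th (tmin + T)) by (apply (th_le th omg Hth omg_pos); lra).
      rewrite Hthp in Hq. assert (sin (th t - psi) <= 0) by (apply sin_le_0; lra).
      pose proof (rho_pos t). nra. }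
    split.
    + replace (HH tmin) with (HH (tmin + IZR 1 * T)) by (apply HH_per).
      rewrite Rmult_1_l. apply Hdn; lra.
    + apply Hdn; lra.
Qed.

Lemma HH_gap tmin tmax : th tmin = psi -> th tmax = psi + PI -> HH tmin < HH tmax.
Proof.
  intros E1 E2. pose proof PI_RGT_0.
  destruct (th_surj (psi + PI / 6)) as [q1 Eq1].
  destruct (th_surj (psi + 5 * PI / 6)) as [q2 Eq2].
  assert (Hq : q1 < q2) by (apply th_lt_inv; lra).
  destruct (mvt HH (fun t => rho t * sin (th t - psi)) q1 q2) as [xi [Hxi Exi]]; [lra|intros; apply dHb|].
  assert (th q1 <= th xi) by (apply (th_le th omg Hth omg_pos); lra).
  assert (th xi <= th q2) by (apply (th_le th omg Hth omg_pos); lra).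
  assert (Hs : 1/4 < sin (th xi - psi)).
  { rewrite <- cos_shift. apply (cos_mid (- (PI/3)) _ (PI / 3)); try lra.
    rewrite cos_neg, cos_PI3; lra. rewrite cos_PI3; lra. }
  pose proof (rho_pos xi).
  assert (HH q1 < HH q2) by (assert (0 < rho xi * sin (th xi - psi) * (q2 - q1)) by (apply Rmult_lt_0_compat; nra); lra).
  pose proof (HH_bounds tmin tmax E1 E2 q1). pose proof (HH_bounds tmin tmax E1 E2 q2). lra.
Qed.

Lemma width_eq tmin tmax : th tmin = psi -> th tmax = psi + PI -> width gx gy psi = HH tmax - HH tmin.
Proof.
  intros E1 E2. pose proof (HH_bounds tmin tmax E1 E2) as Hb.
  unfold width, support.
  assert (L1 : Lub_Rbar (fun s => exists t, s = dot2 (gx t) (gy t) (- sin psi) (cos psi)) = Finite (HH tmax)).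
  { apply is_lub_Rbar_unique. split.
    - intros x [t ->]. simpl. unfold dot2. fold (HH t). apply Hb.
    - intros b Hub. apply Hub. exists tmax. reflexivity. }
  assert (L2 : Lub_Rbar (fun s => exists t, s = dot2 (gx t) (gy t) (sin psi) (- cos psi)) = Finite (- HH tmin)).
  { apply is_lub_Rbar_unique. split.
    - intros x [t ->]. simpl. unfold dot2. unfold HH in *. specialize (Hb t). lra.
    - intros b Hub. apply Hub. exists tmin. unfold dot2, HH. ring. }
  rewrite L1, L2. simpl. ring.
Qed.


Lemma core_main : forall eps, 0 < eps -> exists R0, forall r, R0 < r ->
    let ax := ox + r * cos psi in
    let ay := oy + r * sin psi in
    in_exterior gx gy ax ay /\
    (exists px py qx qy,
        is_tangency_point gx gy ax ay px py /\
        is_tangency_point gx gy ax ay qx qy /\ (px, py) <> (qx, qy)) /\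
    (forall px py qx qy,
        is_tangency_point gx gy ax ay px py ->
        is_tangency_point gx gy ax ay qx qy ->
        (px, py) <> (qx, qy) ->
        Rabs (C_A ax ay px py qx qy - 4 / width gx gy psi) < eps).
Proof.
  intros eps Heps. pose proof PI_RGT_0 as Hpi.
  assert (Hvvp : forall t, vx (t + T) ^ 2 + vy (t + T) ^ 2 = vx t ^ 2 + vy t ^ 2) by (intro; unfold vx, vy; rewrite Hpx, Hpy; auto).
  destruct (periodic_max _ T HT vv_cont Hvvp) as [tv Htv].
  set (Mv := vx tv ^ 2 + vy tv ^ 2) in *.
  assert (HMv : 0 <= Mv) by (unfold Mv; nra).
  set (B := sqrt Mv).
  assert (HB0 : 0 <= B) by apply sqrt_pos.
  assert (HB2 : B ^ 2 = Mv) by (unfold B; rewrite <- Rsqr_pow2; apply Rsqr_sqrt; auto).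
  assert (HmB : forall t, Rabs (mm t) <= B).
  { intro t. apply sq_le_abs; auto. rewrite HB2. pose proof (mm_ww t). pose proof (Htv t). pose proof (pow2_ge_0 (ww t)). lra. }
  assert (HwB : forall t, Rabs (ww t) <= B).
  { intro t. apply sq_le_abs; auto. rewrite HB2. pose proof (mm_ww t). pose proof (Htv t). pose proof (pow2_ge_0 (mm t)). lra. }
  assert (Hmm2 : forall t, mm t ^ 2 <= Mv) by (intro t; pose proof (mm_ww t); pose proof (Htv t); pose proof (pow2_ge_0 (ww t)); lra).
  assert (Hssp : forall t, x1 (t + T) ^ 2 + y1 (t + T) ^ 2 = x1 t ^ 2 + y1 t ^ 2) by (intro; rewrite px1, py1; auto).
  destruct (periodic_max _ T HT ss_cont Hssp) as [ts0 Hts0].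
  set (Lr := sqrt (x1 ts0 ^ 2 + y1 ts0 ^ 2)).
  assert (HLr : forall t, rho t <= Lr) by (intro t; apply sqrt_le_1_alt; apply Hts0).
  assert (HLr0 : 0 <= Lr) by apply sqrt_pos.
  destruct (periodic_min omg T HT omg_cont omg_per) as [tc Htc].
  set (cm := omg tc) in *.
  assert (Hcm : 0 < cm) by apply omg_pos.
  destruct (th_surj (psi - PI/2)) as [ta Eta].
  destruct (th_surj (psi + PI/2)) as [tb Etb].
  destruct (th_surj psi) as [tmin Etmin].
  destruct (th_surj (psi + PI)) as [tmax Etmax].
  set (te := ta + T).
  assert (Ete : th te = psi + PI + PI/2) by (unfold te; rewrite Hthp, Eta; lra).
  assert (Htab : ta < tb) by (apply th_lt_inv; lra).
  assert (Htbe : tb < te) by (apply th_lt_inv; lra).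
  pose proof (HH_gap tmin tmax Etmin Etmax) as HW.
  set (W := HH tmax - HH tmin).
  set (E := 2 * (Lr / cm) * Mv).
  assert (HE : 0 <= E) by (unfold E; apply Rmult_le_pos; [apply Rmult_le_pos; [lra|apply Rdiv_le_0_compat; lra]|auto]).
  destruct (final_est Mv W E HMv ltac:(unfold W; lra) HE eps Heps) as [R0 HR0].
  exists (Rmax R0 (2 * B + 1)).
  intros r Hr. cbv zeta.
  assert (HrR0 : R0 < r) by (eapply Rle_lt_trans; [apply Rmax_l|exact Hr]).
  assert (HrB : 2 * B + 1 < r) by (eapply Rle_lt_trans; [apply Rmax_r|exact Hr]).
  set (G := fun t => r * sin (psi - th t) + mm t).
  assert (HG : forall t, tang_det gx gy t (ox + r * cos psi) (oy + r * sin psi) = rho t * G t) by (intro; apply tang_eq).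
  assert (dmmn : forall t, is_derive (fun t => - mm t) t (omg t * - ww t)).
  { intro t. replace (omg t * - ww t) with (- (omg t * ww t)) by ring. apply (is_derive_opp mm). apply dmm. }
  assert (HmBn : forall t, Rabs (- mm t) <= B) by (intro; rewrite Rabs_Ropp; auto).
  assert (HwBn : forall t, Rabs (- ww t) <= B) by (intro; rewrite Rabs_Ropp; auto).
  assert (HG2 : forall t, r * sin (psi + PI - th t) + - mm t = - G t).
  { intro t. unfold G. replace (psi + PI - th t) with ((psi - th t) + PI) by ring. rewrite neg_sin. ring. }
  destruct (win_exists th omg mm ww psi r B ta tb Hth dmm HmB ltac:(lra) Htab Eta Etb) as [z1 [Hz1 Gz1]].
  destruct (win_exists th omg (fun t => - mm t) (fun t => - ww t) (psi + PI) r B tb te Hth dmmn HmBn ltac:(lra) Htbe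
     ltac:(rewrite Etb; field) ltac:(rewrite Ete; field)) as [z2 [Hz2 Gz2]].
  rewrite HG2 in Gz2. fold (G z1) in Gz1.
  assert (Gz2' : G z2 = 0) by lra.
  assert (HGper : forall (k : Z) t, G (t + IZR k * T) = G t).
  { apply (periodic_Z G T). intro t. unfold G, mm. rewrite Hthp.
    unfold vx, vy. rewrite Hpx, Hpy.
    replace (psi - (th t + 2 * PI)) with ((psi - th t) + - (2 * PI)) by ring.
    rewrite sin_plus, sin_plus, cos_plus, cos_neg, sin_neg, cos_2PI, sin_2PI. ring. }
  assert (Hgxper : forall (k : Z) t, gx (t + IZR k * T) = gx t) by (apply periodic_Z; auto).
  assert (Hgyper : forall (k : Z) t, gy (t + IZR k * T) = gy t) by (apply periodic_Z; auto).
  assert (Hchar : forall t, G t = 0 -> (gx t = gx z1 /\ gy t = gy z1) \/ (gx t = gx z2 /\ gy t = gy z2)).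
  { intros t Gt. destruct (reduce_mod T HT t ta) as [k Hk'].
    rewrite <- (Hgxper k t), <- (Hgyper k t). rewrite <- (HGper k t) in Gt.
    set (t' := t + IZR k * T) in *.
    assert (Hth1 : psi - PI/2 <= th t') by (rewrite <- Eta; apply (th_le th omg Hth omg_pos); lra).
    assert (Hth2 : th t' < psi + PI + PI/2) by (rewrite <- Ete; apply th_lt; unfold te; lra).
    destruct (Rle_or_lt (th t') (psi + PI/2)) as [Hc|Hc].
    - left. assert (t' = z1).
      { assert (th ta < th z1) by (apply th_lt; lra). assert (th z1 < th tb) by (apply th_lt; lra).
        apply (win_unique th omg mm ww psi r B Hth omg_pos dmm HmB HwB HB0 ltac:(lra) t' z1); [lra|lra|exact Gt|exact Gz1]. }
      rewrite H. auto.
    - right. assert (t' = z2).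
      { assert (th tb < th z2) by (apply th_lt; lra). assert (th z2 < th te) by (apply th_lt; lra).
        apply (win_unique th omg (fun t => - mm t) (fun t => - ww t) (psi + PI) r B Hth omg_pos dmmn HmBn HwBn HB0 ltac:(lra) t' z2);
          [lra|lra|rewrite HG2; lra|rewrite HG2; lra]. }
      rewrite H. auto. }
  assert (Hz12 : (gx z1, gy z1) <> (gx z2, gy z2)).
  { intro Eq. injection Eq as E1 E2. apply (Hinj z1 z2); auto. unfold te in Hz2. lra. }
  assert (Htang : forall px py, is_tangency_point gx gy (ox + r * cos psi) (oy + r * sin psi) px py ->
     (px = gx z1 /\ py = gy z1) \/ (px = gx z2 /\ py = gy z2)).
  { intros px py [t [-> [-> Ht]]]. apply Hchar. rewrite HG in Ht.
    apply Rmult_integral in Ht. destruct Ht as [Ht|Ht]; auto. pose proof (rho_pos t). lra. }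
  assert (Hest : Rabs (C_A (ox + r * cos psi) (oy + r * sin psi) (gx z1) (gy z1) (gx z2) (gy z2) - 4 / width gx gy psi) < eps).
  { rewrite (width_eq tmin tmax Etmin Etmax). fold W.
    apply (HR0 r psi ox oy (gx z1) (gy z1) (gx z2) (gy z2) HrR0); [apply Htv|apply Htv|].
    assert (S1 : HH z1 - HH tmin <= Lr / cm * (1 - cos (psi - th z1))).
    { apply (side_est th omg HH rho psi Lr cm Hth Htc Hcm); auto.
      - intro t. apply dHb.
      - assert (th ta < th z1) by (apply th_lt; lra). assert (th z1 < th tb) by (apply th_lt; lra). split; lra. }
    assert (C1 : 1 - cos (psi - th z1) <= Mv / (r * r)).
    { apply (one_minus_cos _ r (- mm z1) Mv); [| | |lra].
      - assert (th ta < th z1) by (apply th_lt; lra). assert (th z1 < th tb) by (apply th_lt; lra). apply cos_ge_0; lra.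
      - unfold G in Gz1. lra.
      - replace ((- mm z1) ^ 2) with (mm z1 ^ 2) by ring. auto. }
    set (Hb2 := fun t => gx t * (- sin (psi + PI)) + gy t * cos (psi + PI)).
    assert (S2 : Hb2 z2 - Hb2 tmax <= Lr / cm * (1 - cos (psi + PI - th z2))).
    { apply (side_est th omg Hb2 rho (psi + PI) Lr cm Hth Htc Hcm); auto.
      - intro t. apply dHb.
      - assert (th tb < th z2) by (apply th_lt; lra). assert (th z2 < th te) by (apply th_lt; lra). split; lra. }
    assert (C2 : 1 - cos (psi + PI - th z2) <= Mv / (r * r)).
    { apply (one_minus_cos _ r (mm z2) Mv); [| | auto |lra].
      - assert (th tb < th z2) by (apply th_lt; lra). assert (th z2 < th te) by (apply th_lt; lra). apply cos_ge_0; lra.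
      - pose proof (HG2 z2). lra. }
    assert (Ehb : forall t, Hb2 t = - HH t) by (intro t; unfold Hb2, HH; rewrite neg_sin, neg_cos; ring).
    rewrite !Ehb in S2.
    pose proof (HH_bounds tmin tmax Etmin Etmax z1). pose proof (HH_bounds tmin tmax Etmin Etmax z2).
    assert (Lr / cm * (1 - cos (psi - th z1)) <= Lr / cm * (Mv / (r * r))) by (apply Rmult_le_compat_l; auto; apply Rdiv_le_0_compat; lra).
    assert (Lr / cm * (1 - cos (psi + PI - th z2)) <= Lr / cm * (Mv / (r * r))) by (apply Rmult_le_compat_l; auto; apply Rdiv_le_0_compat; lra).
    apply Rabs_le. unfold W, E in *; unfold HH in *.
    replace (2 * (Lr / cm) * Mv / (r * r)) with (2 * (Lr / cm * (Mv / (r * r)))) by (field; lra).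
    split; lra. }
  split; [|split].
  - exists tb. rewrite HG. unfold G. rewrite Etb. replace (psi - (psi + PI / 2)) with (- (PI / 2)) by ring.
    rewrite sin_neg, sin_PI2. pose proof (rho_pos tb). pose proof (HmB tb) as Hm. apply abs_btw in Hm.
    pose proof (Hk tb). assert (rho tb * (r * -1 + mm tb) < 0) by (apply Rmult_pos_neg; lra).
    apply Rmult_pos_neg; lra.
  - exists (gx z1), (gy z1), (gx z2), (gy z2). split; [|split]; auto.
    + exists z1. split; [auto|split; auto]. rewrite HG. rewrite Gz1. ring.
    + exists z2. split; [auto|split; auto]. rewrite HG. rewrite Gz2'. ring.
  - intros px py qx qy HP HQ Hne.
    destruct (Htang px py HP) as [[-> ->]|[-> ->]]; destruct (Htang qx qy HQ) as [[-> ->]|[-> ->]].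
    + exfalso. apply Hne. auto.
    + exact Hest.
    + rewrite C_A_sym. exact Hest.
    + exfalso. apply Hne. auto.
Qed.

End Core.

Lemma main_pos (gx gy : R -> R) (T ox oy psi : R) :
  0 < T -> (forall n t, ex_derive_n gx n t) -> (forall n t, ex_derive_n gy n t) ->
  (forall t, gx (t + T) = gx t) -> (forall t, gy (t + T) = gy t) ->
  (forall s t, 0 < t - s < T -> gx s = gx t -> gy s = gy t -> False) ->
  (forall t, 0 < curv_num gx gy t) ->
  in_interior gx gy ox oy ->
  forall eps : R, 0 < eps ->
  exists R0 : R, forall r : R, R0 < r ->
    let ax := ox + r * cos psi in
    let ay := oy + r * sin psi in
    in_exterior gx gy ax ay /\
    (exists px py qx qy,
        is_tangency_point gx gy ax ay px py /\
        is_tangency_point gx gy ax ay qx qy /\ (px, py) <> (qx, qy)) /\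
    (forall px py qx qy,
        is_tangency_point gx gy ax ay px py ->
        is_tangency_point gx gy ax ay qx qy ->
        (px, py) <> (qx, qy) ->
        Rabs (C_A ax ay px py qx qy - 4 / width gx gy psi) < eps).
Proof.
  intros HT Hsx Hsy Hpx Hpy Hinj Hk Hint.
  assert (HD : forall t, 0 < (gx t - ox) * Derive gy t - (gy t - oy) * Derive gx t).
  { intro t. specialize (Hint t). specialize (Hk t). unfold tang_det, det2 in Hint.
    assert (0 < Derive gx t * (oy - gy t) - Derive gy t * (ox - gx t)).
    { apply (Rmult_lt_reg_l (curv_num gx gy t)); auto. lra. }
    lra. }
  destruct (theta_exists gx gy T ox oy HT Hsx Hsy Hpx Hpy Hinj Hk HD) as [th [Hth [Hpth Hthp]]].
  exact (core_main gx gy T ox oy HT Hsx Hsy Hpx Hpy Hinj Hk th Hth Hpth Hthp psi).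
Qed.

Lemma inj_mod (gx gy : R -> R) T : 0 < T -> (forall t, gx (t + T) = gx t) -> (forall t, gy (t + T) = gy t) ->
  (forall s t, 0 <= s < T -> 0 <= t < T -> gx s = gx t -> gy s = gy t -> s = t) ->
  (forall s t, 0 < t - s < T -> gx s = gx t -> gy s = gy t -> False).
Proof.
  intros HT Hpx Hpy Hinj s t Hst E1 E2.
  destruct (reduce_mod T HT s 0) as [k Hk].
  rewrite <- (periodic_Z gx T Hpx k s), <- (periodic_Z gx T Hpx k t) in E1.
  rewrite <- (periodic_Z gy T Hpy k s), <- (periodic_Z gy T Hpy k t) in E2.
  set (s' := s + IZR k * T) in *. set (t' := t + IZR k * T) in *.
  assert (Hd : t' - s' = t - s) by (unfold s', t'; ring).
  destruct (Rlt_or_le t' T) as [H|H].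
  - assert (s' = t') by (apply Hinj; auto; lra). lra.
  - assert (E1' : gx s' = gx (t' - T)) by (rewrite E1; rewrite <- (Hpx (t' - T)); f_equal; ring).
    assert (E2' : gy s' = gy (t' - T)) by (rewrite E2; rewrite <- (Hpy (t' - T)); f_equal; ring).
    assert (s' = t' - T) by (apply Hinj; auto; lra). lra.
Qed.

Lemma exn_opp f : (forall n t, ex_derive_n f n t) -> forall n t, ex_derive_n (fun y => f (- y)) n t.
Proof. intros H n t. apply ex_derive_n_comp_opp. apply filter_forall. intros; apply H. Qed.

Lemma D1opp f : (forall n t, ex_derive_n f n t) -> forall t, Derive (fun y => f (- y)) t = - Derive f (- t).
Proof.
  intros H t. pose proof (Derive_n_comp_opp f 1 t (filter_forall _ (fun y k _ => H k y))) as E.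
  simpl in E. change (Derive (fun x => f x)) with (Derive f) in E. rewrite E. ring.
Qed.

Lemma D2opp f : (forall n t, ex_derive_n f n t) -> forall t, Derive_n (fun y => f (- y)) 2 t = Derive_n f 2 (- t).
Proof.
  intros H t. pose proof (Derive_n_comp_opp f 2 t (filter_forall _ (fun y k _ => H k y))) as E.
  rewrite E. ring.
Qed.

Lemma curv_opp gx gy : (forall n t, ex_derive_n gx n t) -> (forall n t, ex_derive_n gy n t) ->
  forall t, curv_num (fun y => gx (- y)) (fun y => gy (- y)) t = - curv_num gx gy (- t).
Proof. intros Hx Hy t. unfold curv_num, det2. rewrite !D1opp, !D2opp by auto. ring. Qed.

Lemma tang_opp gx gy : (forall n t, ex_derive_n gx n t) -> (forall n t, ex_derive_n gy n t) ->
  forall t ax ay, tang_det (fun y => gx (- y)) (fun y => gy (- y)) t ax ay = - tang_det gx gy (- t) ax ay.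
Proof. intros Hx Hy t ax ay. unfold tang_det, det2. rewrite !D1opp by auto. ring. Qed.

Lemma tp_opp gx gy : (forall n t, ex_derive_n gx n t) -> (forall n t, ex_derive_n gy n t) ->
  forall ax ay px py, is_tangency_point (fun y => gx (- y)) (fun y => gy (- y)) ax ay px py <-> is_tangency_point gx gy ax ay px py.
Proof.
  intros Hx Hy ax ay px py. unfold is_tangency_point. split.
  - intros [t [E1 [E2 E3]]]. exists (- t). rewrite tang_opp in E3 by auto. split; auto. split; auto. lra.
  - intros [t [E1 [E2 E3]]]. exists (- t). rewrite tang_opp by auto. rewrite !Ropp_involutive. split; auto. split; auto. lra.
Qed.

Lemma ext_opp gx gy : (forall n t, ex_derive_n gx n t) -> (forall n t, ex_derive_n gy n t) ->
  forall ax ay, in_exterior (fun y => gx (- y)) (fun y => gy (- y)) ax ay <-> in_exterior gx gy ax ay.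
Proof.
  intros Hx Hy ax ay. unfold in_exterior. split.
  - intros [t Ht]. exists (- t). rewrite curv_opp, tang_opp in Ht by auto. lra.
  - intros [t Ht]. exists (- t). rewrite curv_opp, tang_opp by auto. rewrite Ropp_involutive. lra.
Qed.

Lemma width_opp gx gy psi : width (fun y => gx (- y)) (fun y => gy (- y)) psi = width gx gy psi.
Proof.
  unfold width, support. f_equal; f_equal; apply Lub_Rbar_eqset; intro x; split.
  - intros [t ->]. exists (- t). reflexivity.
  - intros [t ->]. exists (- t). rewrite Ropp_involutive. reflexivity.
  - intros [t ->]. exists (- t). reflexivity.
  - intros [t ->]. exists (- t). rewrite Ropp_involutive. reflexivity.
Qed.

Theorem lemma2p3 (gx gy : R -> R) (T ox oy psi : R) :
  is_oval gx gy T ->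
  in_interior gx gy ox oy ->
  forall eps : R, 0 < eps ->
  exists R0 : R, forall r : R, R0 < r ->
    let ax := ox + r * cos psi in
    let ay := oy + r * sin psi in
    in_exterior gx gy ax ay /\
    (exists px py qx qy,
        is_tangency_point gx gy ax ay px py /\
        is_tangency_point gx gy ax ay qx qy /\ (px, py) <> (qx, qy)) /\
    (forall px py qx qy,
        is_tangency_point gx gy ax ay px py ->
        is_tangency_point gx gy ax ay qx qy ->
        (px, py) <> (qx, qy) ->
        Rabs (C_A ax ay px py qx qy - 4 / width gx gy psi) < eps).
Proof.
  intros [HT [Hsx [Hsy [Hper [Hinj0 Hcurv]]]]] Hint.
  assert (Hpx : forall t, gx (t + T) = gx t) by (intro; apply Hper).
  assert (Hpy : forall t, gy (t + T) = gy t) by (intro; apply Hper).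
  pose proof (inj_mod gx gy T HT Hpx Hpy Hinj0) as Hinj.
  assert (Hcc : continuity (fun t => curv_num gx gy t)).
  { unfold curv_num, det2. apply cont_minus; apply cont_mult; intro t;
      [apply (is_derive_cont _ _ _ (Derive_correct _ _ (Hsx 2%nat t)))
      |apply (is_derive_cont _ _ _ (Derive_correct _ _ (Hsy 3%nat t)))
      |apply (is_derive_cont _ _ _ (Derive_correct _ _ (Hsy 2%nat t)))
      |apply (is_derive_cont _ _ _ (Derive_correct _ _ (Hsx 3%nat t)))]. }
  destruct (nozero_sign _ Hcc Hcurv) as [Hpos|Hneg].
  - exact (main_pos gx gy T ox oy psi HT Hsx Hsy Hpx Hpy Hinj Hpos Hint).
  - set (hx := fun y => gx (- y)). set (hy := fun y => gy (- y)).
    assert (Hhx : forall n t, ex_derive_n hx n t) by (apply exn_opp; auto).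
    assert (Hhy : forall n t, ex_derive_n hy n t) by (apply exn_opp; auto).
    assert (Hphx : forall t, hx (t + T) = hx t).
    { intro t. unfold hx. rewrite <- (Hpx (- (t + T))). f_equal. ring. }
    assert (Hphy : forall t, hy (t + T) = hy t).
    { intro t. unfold hy. rewrite <- (Hpy (- (t + T))). f_equal. ring. }
    assert (Hinjh : forall s t, 0 < t - s < T -> hx s = hx t -> hy s = hy t -> False).
    { intros s t Hst E1 E2. apply (Hinj (- t) (- s)); unfold hx, hy in *; auto; lra. }
    assert (Hkh : forall t, 0 < curv_num hx hy t).
    { intro t. unfold hx, hy. rewrite curv_opp by auto. specialize (Hneg (- t)). lra. }
    assert (Hinth : in_interior hx hy ox oy).
    { intro t. unfold hx, hy. rewrite curv_opp, tang_opp by auto. specialize (Hint (- t)). lra. }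
    intros eps Heps.
    destruct (main_pos hx hy T ox oy psi HT Hhx Hhy Hphx Hphy Hinjh Hkh Hinth eps Heps) as [R0 HR0].
    exists R0. intros r Hr. specialize (HR0 r Hr). cbv zeta in *.
    unfold hx, hy in HR0. rewrite width_opp in HR0.
    destruct HR0 as [A1 [[px [py [qx [qy [B1 [B2 B3]]]]]] A3]].
    split; [|split].
    + apply ext_opp; auto.
    + exists px, py, qx, qy. split; [|split]; auto; apply tp_opp; auto.
    + intros px' py' qx' qy' P Q N. apply A3; auto; apply tp_opp; auto.
Qed.
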